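(* $\operatorname{Proj}^-_\mathbb{R}\le_{\mathrm{W}}\operatorname{LLPO}*\lim$.
   Context: Represented spaces: a representation of a set $X$ is a partial surjection $\delta_X:\subseteq\mathbb{N}^\mathbb{N}\to X$. For a partial multi-valued function $f:\subseteq X\rightrightarrows Y$, a realizer is a partial $F:\subseteq\mathbb{N}^\mathbb{N}\to\mathbb{N}^\mathbb{N}$ with $\delta_Y(F(p))\in f(\delta_X(p))$ for all $p$ with $\delta_X(p)\in\mathrm{dom}(f)$. Weihrauch reducibility: $f\le_{\mathrm{W}} g$ iff there are computable partial $H:\subseteq\mathbb{N}^\mathbb{N}\times\mathbb{N}^\mathbb{N}\to\mathbb{N}^\mathbb{N}$ and $K:\subseteq\mathbb{N}^\mathbb{N}\to\mathbb{N}^\mathbb{N}$ such that $p\mapsto H(p,G(K(p)))$ is a realizer of $f$ for every realizer $G$ of $g$. The compositional product $g*f$ is the Weihrauch degree which is the maximum (it exists) of the degrees of $g_0\circ f_0$ over all $g_0\le_{\mathrm{W}}g$ and $f_0\le_{\mathrm{W}}f$ (with matching intermediate spaces); thus $h\le_{\mathrm{W}}g*f$ means $h\le_{\mathrm{W}}g_0\circ f_0$ for some such $g_0,f_0$. $\mathbb{R}$ has the Cauchy representation. $\mathcal{A}_-(\mathbb{R})$: closed subsets of $\mathbb{R}$, a name of $A$ being an enumeration of rational open intervals whose union is $\mathbb{R}\setminus A$. For $x\in\mathbb{R}$ and nonempty closed $A$, a projection point of $x$ onto $A$ is $y\in A$ with $|x-y|=d(x,A)$. $\operatorname{Proj}^-_\mathbb{R}:\subseteq\mathbb{R}\times\mathcal{A}_-(\mathbb{R})\rightrightarrows\mathbb{R}$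 maps $(x,A)$, $A\ne\emptyset$, to the set of projection points of $x$ onto $A$. $\operatorname{LLPO}:\subseteq\mathbb{N}^\mathbb{N}\times\mathbb{N}^\mathbb{N}\rightrightarrows\{0,1\}$: its domain consists of pairs $(p_0,p_1)$ such that there is at most one pair $(j,m)$ with $p_j(m)\ne0$, and $i\in\operatorname{LLPO}(p_0,p_1)$ iff $p_i=0^\mathbb{N}$. $\lim:\subseteq(\mathbb{N}^\mathbb{N})^\mathbb{N}\to\mathbb{N}^\mathbb{N}$ maps a convergent sequence in Baire space to its limit. *)

(* Defs.v *)
From Stdlib Require Import Reals QArith Qreals List Arith Cantor.
Open Scope R_scope.

Definition Baire := nat -> nat.

Definition npair (a b : nat) : nat := Cantor.to_nat (a, b).
Definition nunpair (n : nat) : nat * nat := Cantor.of_nat n.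

Fixpoint code_list (l : list nat) : nat :=
  match l with
  | nil => 0%nat
  | a :: l' => S (npair a (code_list l'))
  end.

Definition prefix (p : Baire) (k : nat) : list nat := map p (seq 0 k).

Definition bpair (p q : Baire) : Baire :=
  fun n => if Nat.even n then p (Nat.div2 n) else q (Nat.div2 n).
Definition bfst (r : Baire) : Baire := fun n => r (2 * n)%nat.
Definition bsnd (r : Baire) : Baire := fun n => r (S (2 * n)).

Inductive recf : Type :=
| RZero : recf
| RSucc : recf
| RProj : nat -> recf
| RComp : recf -> list recf -> recf
| RPrim : recf -> recf -> recf
| RMu   : recf -> recf.

Inductive reval : recf -> list nat -> nat -> Prop :=
| ev_zero xs : reval RZero xs 0
| ev_succ x xs : reval RSucc (x :: xs) (S x)
| ev_proj i xs v : nth_error xs i = Some v -> reval (RProj i) xs v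
| ev_comp f gs xs ys v :
    revals gs xs ys -> reval f ys v -> reval (RComp f gs) xs v
| ev_prim0 f g xs v : reval f xs v -> reval (RPrim f g) (0%nat :: xs) v
| ev_primS f g n xs u v :
    reval (RPrim f g) (n :: xs) u -> reval g (n :: u :: xs) v ->
    reval (RPrim f g) (S n :: xs) v
| ev_mu f xs n :
    reval f (n :: xs) 0 ->
    (forall m, (m < n)%nat -> exists k, reval f (m :: xs) (S k)) ->
    reval (RMu f) xs n
with revals : list recf -> list nat -> list nat -> Prop :=
| evs_nil xs : revals nil xs nil
| evs_cons g gs xs v vs :
    reval g xs v -> revals gs xs vs -> revals (g :: gs) xs (v :: vs).

Definition computable_nat (alpha : nat -> nat) : Prop :=
  exists r : recf, forall n, reval r (n :: nil) (alpha n).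

(* F_alpha(p) = q  iff for every n there is a least k with
   alpha <n, code(p|k)> > 0, and then q n = alpha <n, code(p|k)> - 1.
   A partial F :⊆ N^N -> N^N is computable iff F_alpha extends F for some
   computable alpha. *)
Definition assoc_eval (alpha : nat -> nat) (p q : Baire) : Prop :=
  forall n, exists k,
    alpha (npair n (code_list (prefix p k))) = S (q n) /\
    (forall j, (j < k)%nat -> alpha (npair n (code_list (prefix p j))) = 0%nat).

(* a representation of X: delta p x  means  delta_X(p) = x *)
Definition rep (X : Type) := Baire -> X -> Prop.

Definition is_rep {X : Type} (d : rep X) : Prop :=
  (forall p x y, d p x -> d p y -> x = y) /\ (forall x, exists p, d p x).

(* partial multi-valued function f :⊆ X ⇉ Y as its graph; dom f = {x | f(x) <> ∅} *)
Definition mvf (X Y : Type) := X -> Y -> Prop.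
Definition mdom {X Y} (f : mvf X Y) (x : X) : Prop := exists y, f x y.

(* composition of multi-valued functions:
   dom(g∘f) = {x ∈ dom f | f(x) ⊆ dom g},  (g∘f)(x) = g(f(x)) *)
Definition mcomp {X Y Z} (g : mvf Y Z) (f : mvf X Y) : mvf X Z :=
  fun x z => (forall y, f x y -> mdom g y) /\ exists y, f x y /\ g y z.

Record pfun := { pdom : Baire -> Prop; pval : Baire -> Baire }.

Definition realizer {X Y} (dX : rep X) (dY : rep Y) (f : mvf X Y) (G : pfun) : Prop :=
  forall p x, dX p x -> mdom f x ->
    pdom G p /\ exists y, dY (pval G p) y /\ f x y.

(* Weihrauch reducibility f <=_W g, where H :⊆ N^N x N^N -> N^N is computable
   (acting on the pairing <p,q>) and K :⊆ N^N -> N^N is computable. *)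
Definition WRed {X Y Z W} (dX : rep X) (dY : rep Y) (dZ : rep Z) (dW : rep W)
  (f : mvf X Y) (g : mvf Z W) : Prop :=
  exists aK aH : nat -> nat,
    computable_nat aK /\ computable_nat aH /\
    forall G : pfun, realizer dZ dW g G ->
      forall p x, dX p x -> mdom f x ->
        exists k r,
          assoc_eval aK p k /\ pdom G k /\
          assoc_eval aH (bpair p (pval G k)) r /\
          exists y, dY r y /\ f x y.

(* h <=_W g * f : h <=_W g0 ∘ f0 for some g0 <=_W g, f0 <=_W f
   with matching intermediate represented space. *)
Definition WRed_cprod {X Y A B C D} (dX : rep X) (dY : rep Y)
  (dA : rep A) (dB : rep B) (dC : rep C) (dD : rep D)
  (h : mvf X Y) (g : mvf C D) (f : mvf A B) : Prop :=
  exists (U V T : Type) (dU : rep U) (dV : rep V) (dT : rep T)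
         (f0 : mvf U V) (g0 : mvf V T),
    is_rep dU /\ is_rep dV /\ is_rep dT /\
    WRed dU dV dA dB f0 f /\
    WRed dV dT dC dD g0 g /\
    WRed dX dY dU dT h (mcomp g0 f0).

Definition rep_baire : rep Baire := fun p q => forall n, p n = q n.

Definition rep_prod {X Y} (dX : rep X) (dY : rep Y) : rep (X * Y) :=
  fun r xy => dX (bfst r) (fst xy) /\ dY (bsnd r) (snd xy).

Definition rep_baire_seq : rep (nat -> Baire) :=
  fun p s => forall n k, p (npair n k) = s n k.

Definition rep_bool : rep bool :=
  fun p b => p 0%nat = (if b then 1%nat else 0%nat).

Definition nat_to_Z (a : nat) : Z :=
  if Nat.even a then Z.of_nat (Nat.div2 a) else (- Z.of_nat (S (Nat.div2 a)))%Z.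
Definition nat_to_Q (n : nat) : Q :=
  let (a, b) := nunpair n in Qmake (nat_to_Z a) (Pos.of_succ_nat b).

Definition rep_cauchy : rep R :=
  fun p x => forall n, Rabs (Q2R (nat_to_Q (p n)) - x) <= / 2 ^ n.

Definition in_interval (k : nat) (x : R) : Prop :=
  let (a, b) := nunpair k in Q2R (nat_to_Q a) < x < Q2R (nat_to_Q b).

(* A_-(R): p enumerates rational open intervals (p(n) = 0: no interval,
   p(n) = k+1: interval coded by k) whose union is R \ A. *)
Definition rep_closed_neg : rep (R -> Prop) :=
  fun p A => forall x, ~ A x <-> exists n k, p n = S k /\ in_interval k x.

Definition Proj : mvf (R * (R -> Prop)) R :=
  fun xA y =>
    let (x, A) := xA in
    (exists z, A z) /\ A y /\ (forall z, A z -> Rabs (x - y) <= Rabs (x - z)).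

Definition LLPO : mvf (Baire * Baire) bool :=
  fun pp i =>
    let sel := fun j : bool => if j then snd pp else fst pp in
    (forall (j j' : bool) (m m' : nat),
        sel j m <> 0%nat -> sel j' m' <> 0%nat -> j = j' /\ m = m') /\
    (forall m, sel i m = 0%nat).

Definition lim : mvf (nat -> Baire) Baire :=
  fun s q => forall i, exists N, forall k, (N <= k)%nat -> s k i = q i.

(* Main.v *)
Require Import Defs.
From Stdlib Require Import Reals QArith List Arith.
From Stdlib Require Import Qreals Lia Lra Classical ClassicalEpsilon ZArith FunctionalExtensionality Cantor.
Import ListNotations.

Local Open Scope nat_scope.

Inductive expr : Type :=
| EVar (i : nat)
| EConst (c : nat)
| EAdd (a b : expr) | ESub (a b : expr) | EMul (a b : expr)
| EIf (c a b : expr)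
| ELt (a b : expr)
| ERec (n z s : expr)
| ELet (a b : expr)
| ECall1 (f a : expr) | ECall2 (f a b : expr) | ECall3 (f a b c : expr).

Fixpoint rec_iter (z : nat) (st : nat -> nat -> nat) (k : nat) : nat :=
  match k with 0 => z | S k' => st k' (rec_iter z st k') end.

Fixpoint eval (env : list nat) (e : expr) : nat :=
  match e with
  | EVar i => nth i env 0
  | EConst c => c
  | EAdd a b => eval env a + eval env b
  | ESub a b => eval env a - eval env b
  | EMul a b => eval env a * eval env b
  | EIf c a b => if eval env c =? 0 then eval env b else eval env a
  | ELt a b => if eval env a <? eval env b then 1 else 0
  | ERec n z s => rec_iter (eval env z) (fun i acc => eval (i :: acc :: env) s) (eval env n)
  | ELet a b => eval (eval env a :: env) b
  | ECall1 f a => eval [eval env a] f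
  | ECall2 f a b => eval [eval env a; eval env b] f
  | ECall3 f a b c => eval [eval env a; eval env b; eval env c] f
  end.

Fixpoint rconst (c : nat) : recf := match c with 0 => RZero | S c' => RComp RSucc [rconst c'] end.
Definition rplus := RPrim (RProj 0) (RComp RSucc [RProj 1]).
Definition rpred := RPrim RZero (RProj 0).
Definition rsub := RPrim (RProj 0) (RComp rpred [RProj 1]).
Definition rmul := RPrim RZero (RComp rplus [RProj 1; RProj 2]).

Definition projs (k : nat) : list recf := map RProj (seq 0 k).

Fixpoint compile (k : nat) (e : expr) : recf :=
  match e with
  | EVar i => if i <? k then RProj i else RZero
  | EConst c => rconst c
  | EAdd a b => RComp rplus [compile k a; compile k b]
  | ESub a b => RComp rsub [compile k b; compile k a]
  | EMul a b => RComp rmul [compile k a; compile k b]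
  | EIf c a b =>
      let nsg := RComp rsub [compile k c; rconst 1] in
      let sg := RComp rsub [nsg; rconst 1] in
      RComp rplus [RComp rmul [compile k a; sg]; RComp rmul [compile k b; nsg]]
  | ELt a b => RComp rsub [RComp rsub [compile k b; RComp RSucc [compile k a]]; rconst 1]
  | ERec n z s => RComp (RPrim (compile k z) (compile (S (S k)) s)) (compile k n :: projs k)
  | ELet a b => RComp (compile (S k) b) (compile k a :: projs k)
  | ECall1 f a => RComp (compile 1 f) [compile k a]
  | ECall2 f a b => RComp (compile 2 f) [compile k a; compile k b]
  | ECall3 f a b c => RComp (compile 3 f) [compile k a; compile k b; compile k c]
  end.

Lemma rconst_ok c xs : reval (rconst c) xs c.
Proof.
  induction c; simpl. constructor.
  econstructor. econstructor. exact IHc. constructor. constructor.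
Qed.

Lemma rplus_ok x y : reval rplus [x; y] (x + y).
Proof.
  induction x; simpl.
  - constructor. constructor. reflexivity.
  - eapply ev_primS. exact IHx. econstructor. econstructor.
    constructor. reflexivity. constructor. constructor.
Qed.

Lemma rpred_ok x : reval rpred [x] (pred x).
Proof.
  induction x; simpl.
  - constructor. constructor.
  - eapply ev_primS. exact IHx. constructor. reflexivity.
Qed.

Lemma rsub_ok y x : reval rsub [y; x] (x - y).
Proof.
  induction y; simpl.
  - rewrite Nat.sub_0_r. constructor. constructor. reflexivity.
  - eapply ev_primS. exact IHy. econstructor. econstructor.
    constructor. reflexivity. constructor.
    replace (x - S y) with (pred (x - y)) by lia. apply rpred_ok.
Qed.

Lemma rmul_ok x y : reval rmul [x; y] (x * y).
Proof.
  induction x; simpl.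
  - constructor. constructor.
  - eapply ev_primS. exact IHx. econstructor.
    econstructor. constructor. reflexivity.
    econstructor. constructor. reflexivity. constructor.
    replace (y + x * y) with (x * y + y) by lia. apply rplus_ok.
Qed.

Lemma projs_ok_gen : forall l pre, revals (map RProj (seq (length pre) (length l))) (pre ++ l) l.
Proof.
  induction l; intros pre; simpl. constructor.
  constructor.
  - constructor. rewrite nth_error_app2 by lia. rewrite Nat.sub_diag. reflexivity.
  - specialize (IHl (pre ++ [a])). rewrite <- app_assoc in IHl. simpl in IHl.
    rewrite length_app in IHl. simpl in IHl. rewrite Nat.add_1_r in IHl. exact IHl.
Qed.

Lemma projs_ok env : revals (projs (length env)) env env.
Proof. apply (projs_ok_gen env []). Qed.

Lemma comp1_ok f g xs a v : reval g xs a -> reval f [a] v -> reval (RComp f [g]) xs v.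
Proof. intros. econstructor; [repeat constructor; eauto | eauto]. Qed.
Lemma comp2_ok f g1 g2 xs a b v : reval g1 xs a -> reval g2 xs b -> reval f [a;b] v ->
  reval (RComp f [g1;g2]) xs v.
Proof. intros. econstructor; [repeat constructor; eauto | eauto]. Qed.
Lemma comp3_ok f g1 g2 g3 xs a b c v : reval g1 xs a -> reval g2 xs b -> reval g3 xs c ->
  reval f [a;b;c] v -> reval (RComp f [g1;g2;g3]) xs v.
Proof. intros. econstructor; [repeat constructor; eauto | eauto]. Qed.

Lemma compile_ok : forall e env, reval (compile (length env) e) env (eval env e).
Proof.
  induction e; intros env; simpl.
  - destruct (i <? length env) eqn:E.
    + apply Nat.ltb_lt in E. constructor. apply nth_error_nth'. exact E.
    + apply Nat.ltb_ge in E. rewrite nth_overflow by exact E. constructor.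
  - apply rconst_ok.
  - eapply comp2_ok; eauto. apply rplus_ok.
  - eapply comp2_ok; eauto. apply rsub_ok.
  - eapply comp2_ok; eauto. apply rmul_ok.
  - replace (if eval env e1 =? 0 then eval env e3 else eval env e2)
        with (eval env e2 * (1 - (1 - eval env e1)) + eval env e3 * (1 - eval env e1))
      by (destruct (eval env e1); simpl; lia).
    eapply comp2_ok; [ | | apply rplus_ok].
    + eapply comp2_ok; [ apply IHe2 | | apply rmul_ok].
      eapply comp2_ok; [ | apply (rconst_ok 1) | apply rsub_ok].
      eapply comp2_ok; [ apply IHe1 | apply (rconst_ok 1) | apply rsub_ok].
    + eapply comp2_ok; [ apply IHe3 | | apply rmul_ok].
      eapply comp2_ok; [ apply IHe1 | apply (rconst_ok 1) | apply rsub_ok].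
  - replace (if eval env e1 <? eval env e2 then 1 else 0)
        with (1 - (S (eval env e1) - eval env e2)).
    + eapply comp2_ok; [ | apply (rconst_ok 1) | apply rsub_ok].
      eapply comp2_ok; [ apply IHe2 | | apply rsub_ok].
      eapply comp1_ok; [ apply IHe1 | constructor ].
    + destruct (eval env e1 <? eval env e2) eqn:E.
      apply Nat.ltb_lt in E. lia. apply Nat.ltb_ge in E. lia.
  - econstructor. constructor. apply IHe1. apply projs_ok.
    generalize (eval env e1) as N. induction N; simpl.
    + apply ev_prim0. apply IHe2.
    + eapply ev_primS. exact IHN. apply (IHe3 (N :: _ :: env)).
  - econstructor. constructor. apply IHe1. apply projs_ok. apply (IHe2 (_ :: env)).
  - eapply comp1_ok. apply IHe2. apply (IHe1 [_]).
  - eapply comp2_ok. apply IHe2. apply IHe3. apply (IHe1 [_;_]).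
  - eapply comp3_ok. apply IHe2. apply IHe3. apply IHe4. apply (IHe1 [_;_;_]).
Qed.

Lemma computable_of_expr (alpha : nat -> nat) (e : expr) :
  (forall x, alpha x = eval [x] e) -> computable_nat alpha.
Proof.
  intros H. exists (compile 1 e). intros n. rewrite H. apply (compile_ok e [n]).
Qed.

Local Open Scope nat_scope.

Lemma rec_iter_ext z st1 st2 n : (forall i a, st1 i a = st2 i a) -> rec_iter z st1 n = rec_iter z st2 n.
Proof. intros H; induction n; simpl; congruence. Qed.

Lemma ite10 (b : bool) (X Y : nat) : (if (if b then 1 else 0) =? 0 then X else Y) = if b then Y else X.
Proof. destruct b; reflexivity. Qed.

Definition firstb (P : nat -> bool) (N : nat) : nat :=
  rec_iter 0 (fun i acc => if acc <? i then acc else if P i then i else S i) N.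

Lemma firstb_spec P N :
  firstb P N <= N /\ (forall i, i < firstb P N -> P i = false) /\
  (firstb P N < N -> P (firstb P N) = true).
Proof.
  induction N; unfold firstb; simpl.
  - split; [lia|split; intros; lia].
  - change (rec_iter 0 (fun i acc => if acc <? i then acc else if P i then i else S i) N) with (firstb P N).
    destruct IHN as (H1 & H2 & H3).
    set (r := firstb P N) in *.
    destruct (r <? N) eqn:E.
    + apply Nat.ltb_lt in E. split. lia. split. auto. intros _; auto.
    + apply Nat.ltb_ge in E. assert (HN : r = N) by lia. clearbody r. subst r.
      destruct (P N) eqn:EP.
      * split. lia. split. auto. auto.
      * split. lia. split. intros i Hi. destruct (Nat.eq_dec i N). subst; auto. apply H2. lia.
        intros; lia.
Qed.

Lemma firstb_eq P N J : J < N -> P J = true -> (forall i, i < J -> P i = false) -> firstb P N = J.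
Proof.
  intros HJ PJ Hlt. destruct (firstb_spec P N) as (H1 & H2 & H3).
  destruct (lt_eq_lt_dec (firstb P N) J) as [[E|E]|E]; auto.
  - rewrite Hlt in H3 by exact E. discriminate H3. lia.
  - rewrite H2 in PJ by exact E. discriminate.
Qed.

Definition tri (t : nat) : nat := rec_iter 0 (fun i acc => i + 1 + acc) t.
Definition E_tri_sig : {E_tri : expr | forall t, eval [t] E_tri = tri t}.
Proof. exists (ERec (EVar 0) (EConst 0) (EAdd (EAdd (EVar 0) (EConst 1)) (EVar 1))). intros t. reflexivity.  Qed.
Definition E_tri := proj1_sig E_tri_sig.
Definition E_tri_ok : forall t, eval [t] E_tri = tri t := proj2_sig E_tri_sig.

Lemma tri_S t : tri (S t) = S t + tri t.
Proof. unfold tri; simpl. lia. Qed.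

Lemma nat_rec_tri n : nat_rec (fun _ => nat) 0 (fun i m => S i + m) n = tri n.
Proof. induction n. reflexivity. rewrite tri_S, <- IHn. reflexivity. Qed.

Lemma to_nat_tri x y : Cantor.to_nat (x, y) = y + tri (y + x).
Proof.
  unfold Cantor.to_nat. f_equal. apply nat_rec_tri.
Qed.

Lemma tri_mono a b : a <= b -> tri a <= tri b.
Proof. induction 1; auto. rewrite tri_S. lia. Qed.

Lemma tri_ge t : t <= tri t.
Proof. induction t; auto. rewrite tri_S. lia. Qed.

Definition diag (n : nat) : nat := firstb (fun t => n <? tri (S t)) (S n).


Definition E_diag_sig : {E_diag : expr | forall n, eval [n] E_diag = diag n}.
Proof. exists (ERec (EAdd (EVar 0) (EConst 1)) (EConst 0)
    (EIf (ELt (EVar 1) (EVar 0)) (EVar 1)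
       (EIf (ELt (EVar 2) (ECall1 E_tri (EAdd (EVar 0) (EConst 1)))) (EVar 0) (EAdd (EVar 0) (EConst 1))))). intros n.
  unfold diag, firstb. simpl eval. rewrite Nat.add_1_r. apply rec_iter_ext.
  intros i a. rewrite !ite10. rewrite Nat.add_1_r, E_tri_ok. reflexivity.
 Qed.
Definition E_diag := proj1_sig E_diag_sig.
Definition E_diag_ok : forall n, eval [n] E_diag = diag n := proj2_sig E_diag_sig.

Lemma diag_spec n : tri (diag n) <= n < tri (S (diag n)).
Proof.
  destruct (firstb_spec (fun t => n <? tri (S t)) (S n)) as (H1 & H2 & H3).
  fold (diag n) in *.
  assert (Hlt : diag n < S n).
  { destruct (Nat.eq_dec (diag n) (S n)); [|lia].
    specialize (H2 n). rewrite e in H2. specialize (H2 (Nat.lt_succ_diag_r n)).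
    apply Nat.ltb_ge in H2. rewrite tri_S in H2. lia. }
  specialize (H3 Hlt). apply Nat.ltb_lt in H3. split; auto.
  destruct (diag n) eqn:E. simpl. unfold tri; simpl; lia.
  specialize (H2 n0 ltac:(lia)). apply Nat.ltb_ge in H2. auto.
Qed.


Lemma unpair_ok n : nunpair n = (diag n - (n - tri (diag n)), n - tri (diag n)).
Proof.
  unfold nunpair. destruct (diag_spec n) as [H1 H2]. rewrite tri_S in H2.
  rewrite <- (Cantor.cancel_of_to (diag n - (n - tri (diag n)), n - tri (diag n))).
  f_equal. rewrite to_nat_tri. replace (n - tri (diag n) + (diag n - (n - tri (diag n)))) with (diag n) by lia.
  lia.
Qed.

Definition E_u2_sig : {E_u2 : expr | forall n, eval [n] E_u2 = snd (nunpair n)}.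
Proof. exists (ESub (EVar 0) (ECall1 E_tri (ECall1 E_diag (EVar 0)))). intros n. rewrite unpair_ok. simpl. rewrite E_diag_ok, E_tri_ok. reflexivity.  Qed.
Definition E_u2 := proj1_sig E_u2_sig.
Definition E_u2_ok : forall n, eval [n] E_u2 = snd (nunpair n) := proj2_sig E_u2_sig.
Definition E_u1_sig : {E_u1 : expr | forall n, eval [n] E_u1 = fst (nunpair n)}.
Proof. exists (ESub (ECall1 E_diag (EVar 0)) (ECall1 E_u2 (EVar 0))). intros n. simpl. rewrite E_u2_ok, unpair_ok. simpl. rewrite E_diag_ok. reflexivity.  Qed.
Definition E_u1 := proj1_sig E_u1_sig.
Definition E_u1_ok : forall n, eval [n] E_u1 = fst (nunpair n) := proj2_sig E_u1_sig.

Definition E_pair_sig : {E_pair : expr | forall x y, eval [x; y] E_pair = npair x y}.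
Proof. exists (EAdd (EVar 1) (ECall1 E_tri (EAdd (EVar 1) (EVar 0)))). intros x y. unfold npair. rewrite to_nat_tri. simpl. rewrite E_tri_ok. reflexivity.  Qed.
Definition E_pair := proj1_sig E_pair_sig.
Definition E_pair_ok : forall x y, eval [x; y] E_pair = npair x y := proj2_sig E_pair_sig.

Lemma npair_unpair n : npair (fst (nunpair n)) (snd (nunpair n)) = n.
Proof. unfold npair, nunpair. rewrite <- surjective_pairing. apply Cantor.cancel_to_of. Qed.
Lemma unpair_npair a b : nunpair (npair a b) = (a, b).
Proof. apply Cantor.cancel_of_to. Qed.

Definition ctail (c : nat) : nat := match c with 0 => 0 | S c' => snd (nunpair c') end.
Definition E_tail_sig : {E_tail : expr | forall c, eval [c] E_tail = ctail c}.
Proof. exists (EIf (EVar 0) (ECall1 E_u2 (ESub (EVar 0) (EConst 1))) (EConst 0)). intros c.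
  destruct c; simpl. reflexivity. rewrite Nat.sub_0_r. apply E_u2_ok.
 Qed.
Definition E_tail := proj1_sig E_tail_sig.
Definition E_tail_ok : forall c, eval [c] E_tail = ctail c := proj2_sig E_tail_sig.
Definition cdrop (t c : nat) : nat := rec_iter c (fun _ acc => ctail acc) t.
Definition E_drop_sig : {E_drop : expr | forall t c, eval [t; c] E_drop = cdrop t c}.
Proof. exists (ERec (EVar 0) (EVar 1) (ECall1 E_tail (EVar 1))). intros t c. unfold cdrop. simpl. apply rec_iter_ext. intros. apply E_tail_ok.  Qed.
Definition E_drop := proj1_sig E_drop_sig.
Definition E_drop_ok : forall t c, eval [t; c] E_drop = cdrop t c := proj2_sig E_drop_sig.

Definition orc_enc (c x : nat) : nat :=
  match cdrop x c with 0 => 0 | S d => S (fst (nunpair d)) end.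
Definition E_orc_sig : {E_orc : expr | forall x c, eval [x; c] E_orc = orc_enc c x}.
Proof. exists (ELet (ECall2 E_drop (EVar 0) (EVar 1))
    (EIf (EVar 0) (EAdd (ECall1 E_u1 (ESub (EVar 0) (EConst 1))) (EConst 1)) (EConst 0))). intros x c.
  unfold orc_enc. simpl. rewrite E_drop_ok. destruct (cdrop x c); simpl. reflexivity.
  rewrite Nat.sub_0_r, E_u1_ok. lia.
 Qed.
Definition E_orc := proj1_sig E_orc_sig.
Definition E_orc_ok : forall x c, eval [x; c] E_orc = orc_enc c x := proj2_sig E_orc_sig.

Lemma ctail_code a l : ctail (code_list (a :: l)) = code_list l.
Proof. simpl. change (snd (nunpair (npair a (code_list l))) = code_list l). rewrite unpair_npair. reflexivity. Qed.

Lemma skipn_S_tl : forall (x : nat) (l : list nat), skipn (S x) l = tl (skipn x l).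
Proof. induction x; intros [|a l]; simpl; auto. apply IHx. Qed.

Lemma cdrop_code : forall x l, cdrop x (code_list l) = code_list (skipn x l).
Proof.
  induction x; intros l. reflexivity.
  change (cdrop (S x) (code_list l)) with (ctail (cdrop x (code_list l))). rewrite IHx, skipn_S_tl.
  destruct (skipn x l); simpl. reflexivity. apply ctail_code.
Qed.

Lemma skipn_map_seq : forall x (p : nat -> nat) s k, skipn x (map p (seq s k)) = map p (seq (s + x) (k - x)).
Proof.
  induction x; intros p s k. simpl. rewrite Nat.add_0_r, Nat.sub_0_r. reflexivity.
  destruct k; simpl. reflexivity. rewrite IHx. f_equal. f_equal. lia.
Qed.

Lemma orc_enc_prefix (p : Baire) k x :
  orc_enc (code_list (prefix p k)) x = if x <? k then S (p x) else 0.
Proof.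
  unfold orc_enc, prefix. rewrite cdrop_code, skipn_map_seq. simpl.
  destruct (x <? k) eqn:E.
  - apply Nat.ltb_lt in E. destruct (k - x) eqn:E2. lia. simpl.
    change (fst (nunpair (npair (p x) (code_list (map p (seq (S x) n))))) ) with (fst (nunpair (npair (p x) (code_list (map p (seq (S x) n)))))).
    rewrite unpair_npair. reflexivity.
  - apply Nat.ltb_ge in E. replace (k - x) with 0 by lia. reflexivity.
Qed.

Local Open Scope nat_scope.

Inductive oexpr : Type :=
| OVar (i : nat)
| OConst (c : nat)
| OAdd (a b : oexpr) | OSub (a b : oexpr) | OMul (a b : oexpr)
| OIf (c a b : oexpr)
| OLt (a b : oexpr)
| ORec (n z s : oexpr)
| OLet (a b : oexpr)
| OOrc (t : oexpr).

Fixpoint oeval (f : nat -> nat) (env : list nat) (e : oexpr) : nat :=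
  match e with
  | OVar i => nth i env 0
  | OConst c => c
  | OAdd a b => oeval f env a + oeval f env b
  | OSub a b => oeval f env a - oeval f env b
  | OMul a b => oeval f env a * oeval f env b
  | OIf c a b => if oeval f env c =? 0 then oeval f env b else oeval f env a
  | OLt a b => if oeval f env a <? oeval f env b then 1 else 0
  | ORec n z s => rec_iter (oeval f env z) (fun i acc => oeval f (i :: acc :: env) s) (oeval f env n)
  | OLet a b => oeval f (oeval f env a :: env) b
  | OOrc t => f (oeval f env t)
  end.

Fixpoint rec_opt (z : option nat) (st : nat -> nat -> option nat) (k : nat) : option nat :=
  match k with
  | 0 => z
  | S k' => match rec_opt z st k' with None => None | Some a => st k' a end
  end.

Definition obind2 (x y : option nat) (h : nat -> nat -> nat) : option nat :=
  match x, y with Some a, Some b => Some (h a b) | _, _ => None end.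

Fixpoint oevalp (g : nat -> option nat) (env : list nat) (e : oexpr) : option nat :=
  match e with
  | OVar i => Some (nth i env 0)
  | OConst c => Some c
  | OAdd a b => obind2 (oevalp g env a) (oevalp g env b) Nat.add
  | OSub a b => obind2 (oevalp g env a) (oevalp g env b) Nat.sub
  | OMul a b => obind2 (oevalp g env a) (oevalp g env b) Nat.mul
  | OIf c a b => match oevalp g env c with
                 | None => None
                 | Some x => if x =? 0 then oevalp g env b else oevalp g env a end
  | OLt a b => obind2 (oevalp g env a) (oevalp g env b) (fun x y => if x <? y then 1 else 0)
  | ORec n z s => match oevalp g env n with
                  | None => None
                  | Some N => rec_opt (oevalp g env z) (fun i acc => oevalp g (i :: acc :: env) s) N end
  | OLet a b => match oevalp g env a with None => None | Some x => oevalp g (x :: env) b end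
  | OOrc t => match oevalp g env t with None => None | Some x => g x end
  end.

Definition consistent (g : nat -> option nat) (f : nat -> nat) := forall t v, g t = Some v -> f t = v.
Definition ole (g g' : nat -> option nat) := forall t v, g t = Some v -> g' t = Some v.

Lemma obind2_some x y h v : obind2 x y h = Some v -> exists a b, x = Some a /\ y = Some b /\ v = h a b.
Proof. destruct x, y; simpl; intros H; try discriminate. inversion H; eauto. Qed.

Lemma oevalp_sound g f (Hc : consistent g f) : forall e env v, oevalp g env e = Some v -> oeval f env e = v.
Proof.
  induction e; intros env v H; simpl in *.
  - congruence.
  - congruence.
  - apply obind2_some in H as (a & b & Ha & Hb & ->). erewrite IHe1, IHe2; eauto.
  - apply obind2_some in H as (a & b & Ha & Hb & ->). erewrite IHe1, IHe2; eauto.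
  - apply obind2_some in H as (a & b & Ha & Hb & ->). erewrite IHe1, IHe2; eauto.
  - destruct (oevalp g env e1) eqn:E1; try discriminate. rewrite (IHe1 _ _ E1).
    destruct (n =? 0); eauto.
  - apply obind2_some in H as (a & b & Ha & Hb & ->). erewrite IHe1, IHe2; eauto.
  - destruct (oevalp g env e1) eqn:E1; try discriminate. rewrite (IHe1 _ _ E1).
    clear E1. revert v H. induction n; simpl; intros v H. eauto.
    destruct (rec_opt _ _ n) eqn:E; try discriminate. rewrite (IHn _ eq_refl). eauto.
  - destruct (oevalp g env e1) eqn:E1; try discriminate. rewrite (IHe1 _ _ E1). eauto.
  - destruct (oevalp g env e) eqn:E1; try discriminate. rewrite (IHe _ _ E1). auto.
Qed.

Lemma oevalp_mono g g' (Hle : ole g g') : forall e env v, oevalp g env e = Some v -> oevalp g' env e = Some v.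
Proof.
  induction e; intros env v H; simpl in *; auto.
  - apply obind2_some in H as (a & b & Ha & Hb & ->). erewrite IHe1, IHe2; eauto. reflexivity.
  - apply obind2_some in H as (a & b & Ha & Hb & ->). erewrite IHe1, IHe2; eauto. reflexivity.
  - apply obind2_some in H as (a & b & Ha & Hb & ->). erewrite IHe1, IHe2; eauto. reflexivity.
  - destruct (oevalp g env e1) eqn:E1; try discriminate. rewrite (IHe1 _ _ E1).
    destruct (n =? 0); eauto.
  - apply obind2_some in H as (a & b & Ha & Hb & ->). erewrite IHe1, IHe2; eauto. reflexivity.
  - destruct (oevalp g env e1) eqn:E1; try discriminate. rewrite (IHe1 _ _ E1).
    clear E1. revert v H. induction n; simpl; intros v H. eauto.
    destruct (rec_opt _ _ n) eqn:E; try discriminate. rewrite (IHn _ eq_refl). eauto.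
  - destruct (oevalp g env e1) eqn:E1; try discriminate. rewrite (IHe1 _ _ E1). eauto.
  - destruct (oevalp g env e) eqn:E1; try discriminate. rewrite (IHe _ _ E1). auto.
Qed.

Lemma rec_opt_mono z z' st st' : (forall v, z = Some v -> z' = Some v) ->
  (forall i a v, st i a = Some v -> st' i a = Some v) ->
  forall N v, rec_opt z st N = Some v -> rec_opt z' st' N = Some v.
Proof.
  intros Hz Hs N. induction N; simpl; intros v H; auto.
  destruct (rec_opt z st N) eqn:E; try discriminate. rewrite (IHN _ eq_refl). auto.
Qed.

Definition rp (p : nat -> nat) (k : nat) (t : nat) : option nat := if t <? k then Some (p t) else None.

Lemma rp_mono p k k' : k <= k' -> ole (rp p k) (rp p k').
Proof.
  unfold ole, rp. intros H t v. destruct (t <? k) eqn:E; try discriminate.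
  apply Nat.ltb_lt in E. assert (t <? k' = true) by (apply Nat.ltb_lt; lia). rewrite H0. auto.
Qed.

Lemma oevalp_complete p : forall e env, exists k, oevalp (rp p k) env e = Some (oeval p env e).
Proof.
  assert (M : forall e env k k' v, k <= k' -> oevalp (rp p k) env e = Some v -> oevalp (rp p k') env e = Some v).
  { intros. eapply oevalp_mono; eauto. apply rp_mono; auto. }
  induction e; intros env; simpl.
  - exists 0; auto.
  - exists 0; auto.
  - destruct (IHe1 env) as [k1 H1]. destruct (IHe2 env) as [k2 H2]. exists (k1 + k2).
    rewrite (M _ _ k1 (k1+k2) _ ltac:(lia) H1), (M _ _ k2 (k1+k2) _ ltac:(lia) H2). reflexivity.
  - destruct (IHe1 env) as [k1 H1]. destruct (IHe2 env) as [k2 H2]. exists (k1 + k2).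
    rewrite (M _ _ k1 (k1+k2) _ ltac:(lia) H1), (M _ _ k2 (k1+k2) _ ltac:(lia) H2). reflexivity.
  - destruct (IHe1 env) as [k1 H1]. destruct (IHe2 env) as [k2 H2]. exists (k1 + k2).
    rewrite (M _ _ k1 (k1+k2) _ ltac:(lia) H1), (M _ _ k2 (k1+k2) _ ltac:(lia) H2). reflexivity.
  - destruct (IHe1 env) as [k1 H1]. destruct (IHe2 env) as [k2 H2]. destruct (IHe3 env) as [k3 H3].
    exists (k1 + k2 + k3).
    rewrite (M _ _ k1 (k1+k2+k3) _ ltac:(lia) H1).
    destruct (oeval p env e1 =? 0).
    + apply (M _ _ k3); auto; lia.
    + apply (M _ _ k2); auto; lia.
  - destruct (IHe1 env) as [k1 H1]. destruct (IHe2 env) as [k2 H2]. exists (k1 + k2).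
    rewrite (M _ _ k1 (k1+k2) _ ltac:(lia) H1), (M _ _ k2 (k1+k2) _ ltac:(lia) H2). reflexivity.
  - destruct (IHe1 env) as [k1 H1]. destruct (IHe2 env) as [k2 H2].
    assert (ML : forall k kk N v, k <= kk ->
       rec_opt (oevalp (rp p k) env e2) (fun i acc => oevalp (rp p k) (i :: acc :: env) e3) N = Some v ->
       rec_opt (oevalp (rp p kk) env e2) (fun i acc => oevalp (rp p kk) (i :: acc :: env) e3) N = Some v).
    { intros k kk N v Hk. apply rec_opt_mono; intros; eapply M; eauto. }
    assert (HL : forall N, exists k, rec_opt (oevalp (rp p k) env e2) (fun i acc => oevalp (rp p k) (i :: acc :: env) e3) N
                  = Some (rec_iter (oeval p env e2) (fun i acc => oeval p (i :: acc :: env) e3) N)).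
    { induction N; simpl.
      - exists k2; auto.
      - destruct IHN as [k H]. destruct (IHe3 (N :: rec_iter (oeval p env e2) (fun i acc => oeval p (i :: acc :: env) e3) N :: env)) as [k' H'].
        exists (k + k').
        rewrite (ML k (k + k') N _ ltac:(lia) H). apply (M _ _ k'); auto. lia. }
    destruct (HL (oeval p env e1)) as [k3 H3]. exists (k1 + k3).
    rewrite (M _ _ k1 (k1+k3) _ ltac:(lia) H1).
    apply (ML k3); auto; lia.
  - destruct (IHe1 env) as [k1 H1]. destruct (IHe2 (oeval p env e1 :: env)) as [k2 H2]. exists (k1 + k2).
    rewrite (M _ _ k1 (k1+k2) _ ltac:(lia) H1). apply (M _ _ k2); auto; lia.
  - destruct (IHe env) as [k1 H1]. exists (S (oeval p env e) + k1).
    rewrite (M _ _ k1 (S (oeval p env e) + k1) _ ltac:(lia) H1). unfold rp.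
    assert (oeval p env e <? S (oeval p env e) + k1 = true) by (apply Nat.ltb_lt; lia). rewrite H. auto.
Qed.

Local Open Scope nat_scope.

Definition enc (o : option nat) : nat := match o with None => 0 | Some v => S v end.

Definition B_bin (op : expr) : expr :=
  EIf (EVar 0) (EIf (EVar 1) (EAdd (ECall2 op (ESub (EVar 0) (EConst 1)) (ESub (EVar 1) (EConst 1))) (EConst 1)) (EConst 0)) (EConst 0).

Lemma B_bin_ok op h x y : (forall a b, eval [a; b] op = h a b) ->
  eval [enc x; enc y] (B_bin op) = enc (obind2 x y h).
Proof.
  intros H. destruct x, y; simpl; auto. rewrite !Nat.sub_0_r, H. lia.
Qed.

Definition B_addop := EAdd (EVar 0) (EVar 1).
Definition B_subop := ESub (EVar 0) (EVar 1).
Definition B_mulop := EMul (EVar 0) (EVar 1).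
Definition B_ltop := ELt (EVar 0) (EVar 1).

Definition B_if : expr := EIf (EVar 0) (EIf (ESub (EVar 0) (EConst 1)) (EVar 1) (EVar 2)) (EConst 0).
Lemma B_if_ok c a b : eval [enc c; a; b] B_if =
  match c with None => 0 | Some x => if x =? 0 then b else a end.
Proof. destruct c as [[|x]|]; simpl; auto. Qed.

Definition B_guard : expr := EIf (EVar 0) (EVar 1) (EConst 0).
Lemma B_guard_ok g v : eval [g; v] B_guard = if g =? 0 then 0 else v.
Proof. reflexivity. Qed.

Definition B_orc : expr := EIf (EVar 0) (ECall2 E_orc (ESub (EVar 0) (EConst 1)) (EVar 1)) (EConst 0).
Definition restr (c : nat) (t : nat) : option nat := match orc_enc c t with 0 => None | S v => Some v end.
Lemma B_orc_ok t c : eval [enc t; c] B_orc = enc (match t with None => None | Some x => restr c x end).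
Proof.
  destruct t; simpl; auto. rewrite Nat.sub_0_r, E_orc_ok. unfold restr. destruct (orc_enc c n); auto.
Qed.

Fixpoint compile_opt (k : nat) (e : oexpr) : recf :=
  match e with
  | OVar i => RComp RSucc [if i <? k then RProj i else RZero]
  | OConst c => rconst (S c)
  | OAdd a b => RComp (compile 2 (B_bin B_addop)) [compile_opt k a; compile_opt k b]
  | OSub a b => RComp (compile 2 (B_bin B_subop)) [compile_opt k a; compile_opt k b]
  | OMul a b => RComp (compile 2 (B_bin B_mulop)) [compile_opt k a; compile_opt k b]
  | OIf c a b => RComp (compile 3 B_if) [compile_opt k c; compile_opt k a; compile_opt k b]
  | OLt a b => RComp (compile 2 (B_bin B_ltop)) [compile_opt k a; compile_opt k b]
  | ORec n z s =>
      RComp (compile 2 B_guard)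
        [compile_opt k n;
         RComp (RPrim (compile_opt k z)
                  (RComp (compile 2 B_guard)
                     [RProj 1; RComp (compile_opt (S (S k)) s)
                                 (RProj 0 :: RComp rpred [RProj 1] :: map RProj (seq 2 k))]))
               (RComp rpred [compile_opt k n] :: projs k)]
  | OLet a b =>
      RComp (compile 2 B_guard)
        [compile_opt k a; RComp (compile_opt (S k) b) (RComp rpred [compile_opt k a] :: projs k)]
  | OOrc t => RComp (compile 2 B_orc) [compile_opt k t; RProj (k - 1)]
  end.

Lemma last_cons2 (i a : nat) env : env <> [] -> last (i :: a :: env) 0 = last env 0.
Proof. intros H. destruct env. congruence. reflexivity. Qed.
Lemma last_cons1 (a : nat) env : env <> [] -> last (a :: env) 0 = last env 0.
Proof. intros H. destruct env. congruence. reflexivity. Qed.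

Lemma nth_error_last (env : list nat) : env <> [] -> nth_error env (length env - 1) = Some (last env 0).
Proof.
  induction env as [|a env IH]; intros H. congruence.
  destruct env as [|b env]. reflexivity.
  specialize (IH ltac:(congruence)). simpl length in *.
  replace (S (S (length env)) - 1) with (S (S (length env) - 1)) by lia. exact IH.
Qed.

Lemma comp_ok_bin (e : expr) xs a b v g1 g2 :
  reval g1 xs a -> reval g2 xs b -> eval [a; b] e = v -> reval (RComp (compile 2 e) [g1; g2]) xs v.
Proof. intros H1 H2 H3. subst. eapply comp2_ok; eauto. apply (compile_ok e [a; b]). Qed.

Lemma comp_ok_tern (e : expr) xs a b c v g1 g2 g3 :
  reval g1 xs a -> reval g2 xs b -> reval g3 xs c -> eval [a; b; c] e = v ->
  reval (RComp (compile 3 e) [g1; g2; g3]) xs v.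
Proof. intros H1 H2 H3 H4. subst. eapply comp3_ok; eauto. apply (compile_ok e [a; b; c]). Qed.

Lemma compile_opt_ok : forall e env, env <> [] ->
  reval (compile_opt (length env) e) env (enc (oevalp (restr (last env 0)) env e)).
Proof.
  induction e; intros env Hne; cbn [compile_opt oevalp].
  - eapply comp1_ok; [|constructor].
    destruct (i <? length env) eqn:E.
    + apply Nat.ltb_lt in E. constructor. apply nth_error_nth'. exact E.
    + apply Nat.ltb_ge in E. rewrite nth_overflow by exact E. constructor.
  - apply (rconst_ok (S c)).
  - eapply comp_ok_bin; eauto. apply B_bin_ok. reflexivity.
  - eapply comp_ok_bin; eauto. apply B_bin_ok. reflexivity.
  - eapply comp_ok_bin; eauto. apply B_bin_ok. reflexivity.
  - eapply comp_ok_tern; eauto. rewrite B_if_ok.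
    destruct (oevalp _ env e1); auto. destruct (n =? 0); auto.
  - eapply comp_ok_bin; eauto. apply B_bin_ok. reflexivity.
  - set (c := last env 0) in *.
    set (N := oevalp (restr c) env e1).
    assert (Hloop : forall M, reval (RPrim (compile_opt (length env) e2)
                  (RComp (compile 2 B_guard)
                     [RProj 1; RComp (compile_opt (S (S (length env))) e3)
                                 (RProj 0 :: RComp rpred [RProj 1] :: map RProj (seq 2 (length env)))]))
                  (M :: env)
                  (enc (rec_opt (oevalp (restr c) env e2) (fun i acc => oevalp (restr c) (i :: acc :: env) e3) M))).
    { induction M; cbn [rec_opt].
      - apply ev_prim0. apply IHe2; auto.
      - eapply ev_primS. exact IHM.
        set (r := rec_opt _ _ M).
        eapply comp_ok_bin. constructor; reflexivity.
        + eapply ev_comp. constructor. constructor; reflexivity.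
          constructor. eapply comp1_ok. constructor; reflexivity. apply rpred_ok.
          apply (projs_ok_gen env [M; enc r]).
          pose proof (IHe3 (M :: pred (enc r) :: env) ltac:(congruence)) as IH.
          rewrite last_cons2 in IH by auto. exact IH.
        + rewrite B_guard_ok. destruct r; reflexivity. }
    eapply comp_ok_bin. apply IHe1; auto.
    + eapply ev_comp. constructor. eapply comp1_ok. apply IHe1; auto. apply rpred_ok. apply projs_ok.
      apply Hloop.
    + rewrite B_guard_ok. change (last env 0) with c. fold N. destruct N; reflexivity.
  - eapply comp_ok_bin. apply IHe1; auto.
    + eapply ev_comp. constructor. eapply comp1_ok. apply IHe1; auto. apply rpred_ok. apply projs_ok.
      pose proof (IHe2 (pred (enc (oevalp (restr (last env 0)) env e1)) :: env) ltac:(congruence)) as IH.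
      rewrite last_cons1 in IH by auto. exact IH.
    + rewrite B_guard_ok. destruct (oevalp _ env e1); reflexivity.
  - eapply comp_ok_bin. apply IHe; auto.
    + constructor. apply nth_error_last. auto.
    + apply B_orc_ok.
Qed.


Local Open Scope nat_scope.

Fixpoint fvb (b : nat) (e : oexpr) : bool :=
  match e with
  | OVar i => i <? b
  | OConst _ => true
  | OAdd x y | OSub x y | OMul x y | OLt x y => fvb b x && fvb b y
  | OIf c x y => fvb b c && fvb b x && fvb b y
  | ORec n z s => fvb b n && fvb b z && fvb (S (S b)) s
  | OLet a c => fvb b a && fvb (S b) c
  | OOrc t => fvb b t
  end.

Lemma rec_opt_ext z st st' : (forall i a, st i a = st' i a) -> forall N, rec_opt z st N = rec_opt z st' N.
Proof. intros H N. induction N; simpl; auto. rewrite IHN. destruct (rec_opt z st' N); auto. Qed.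

Lemma oevalp_fvb g : forall e env1 env2, fvb (length env1) e = true ->
  oevalp g (env1 ++ env2) e = oevalp g env1 e.
Proof.
  induction e; intros env1 env2 H; simpl in *;
    repeat match goal with H : (_ && _) = true |- _ => apply andb_prop in H; destruct H end.
  - apply Nat.ltb_lt in H. rewrite app_nth1 by exact H. reflexivity.
  - reflexivity.
  - rewrite IHe1, IHe2 by auto. reflexivity.
  - rewrite IHe1, IHe2 by auto. reflexivity.
  - rewrite IHe1, IHe2 by auto. reflexivity.
  - rewrite IHe1 by auto. destruct (oevalp g env1 e1); auto. destruct (n =? 0); auto.
  - rewrite IHe1, IHe2 by auto. reflexivity.
  - rewrite IHe1 by auto. destruct (oevalp g env1 e1); auto. rewrite IHe2 by auto.
    apply rec_opt_ext. intros i a. apply (IHe3 (i :: a :: env1)). simpl; auto.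
  - rewrite IHe1 by auto. destruct (oevalp g env1 e1); auto. apply (IHe2 (n :: env1)). auto.
  - rewrite IHe by auto. reflexivity.
Qed.

Lemma oevalp_ext g g' : (forall t, g t = g' t) -> forall e env, oevalp g env e = oevalp g' env e.
Proof.
  intros Hg. induction e; intros env; simpl; auto.
  - rewrite IHe1, IHe2; auto.
  - rewrite IHe1, IHe2; auto.
  - rewrite IHe1, IHe2; auto.
  - rewrite IHe1, IHe2, IHe3; auto.
  - rewrite IHe1, IHe2; auto.
  - rewrite IHe1, IHe2. destruct (oevalp g' env e1); auto.
    apply rec_opt_ext. intros; apply IHe3.
  - rewrite IHe1. destruct (oevalp g' env e1); auto.
  - rewrite IHe. destruct (oevalp g' env e); auto.
Qed.

Lemma ex_least (P : nat -> Prop) : (forall k, P k \/ ~ P k) -> forall k, P k ->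
  exists k', P k' /\ forall j, j < k' -> ~ P j.
Proof.
  intros Hd k. induction k as [k IH] using (well_founded_induction lt_wf). intros Hk.
  assert (H : (exists j, j < k /\ P j) \/ ~ (exists j, j < k /\ P j)).
  { clear IH Hk. induction k. right. intros [j [Hj _]]. lia.
    destruct IHk as [[j [Hj Pj]]|Hn]. left; exists j; split; auto; lia.
    destruct (Hd k) as [Pk|Pk]. left; exists k; auto.
    right. intros [j [Hj Pj]]. destruct (Nat.eq_dec j k). subst; auto. apply Hn. exists j; split; auto; lia. }
  destruct H as [[j [Hj Pj]]|Hn]. apply (IH j Hj Pj).
  exists k. split; auto. intros j Hj Pj. apply Hn. eauto.
Qed.

Definition alpha_of (e : oexpr) (w : nat) : nat :=
  enc (oevalp (restr (snd (nunpair w))) [fst (nunpair w); snd (nunpair w)] e).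

Lemma alpha_of_computable e : computable_nat (alpha_of e).
Proof.
  exists (RComp (compile_opt 2 e) [compile 1 E_u1; compile 1 E_u2]). intros w.
  eapply comp2_ok.
  - pose proof (compile_ok E_u1 [w]). rewrite E_u1_ok in H. exact H.
  - pose proof (compile_ok E_u2 [w]). rewrite E_u2_ok in H. exact H.
  - apply (compile_opt_ok e [fst (nunpair w); snd (nunpair w)]). congruence.
Qed.

Lemma restr_prefix (p : Baire) k t : restr (code_list (prefix p k)) t = rp p k t.
Proof. unfold restr, rp. rewrite orc_enc_prefix. destruct (t <? k); auto. Qed.

Lemma alpha_of_assoc e : fvb 1 e = true -> forall p : Baire, assoc_eval (alpha_of e) p (fun n => oeval p [n] e).
Proof.
  intros Hfv p n.
  assert (Ha : forall k, alpha_of e (npair n (code_list (prefix p k))) = enc (oevalp (rp p k) [n] e)).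
  { intros k. unfold alpha_of. rewrite unpair_npair. simpl fst; simpl snd.
    rewrite (oevalp_fvb _ e [n] [code_list (prefix p k)]) by exact Hfv.
    f_equal. apply oevalp_ext. intros t. apply restr_prefix. }
  destruct (oevalp_complete p e [n]) as [k0 H0].
  destruct (ex_least (fun k => oevalp (rp p k) [n] e <> None)) with (k := k0) as [k [Hk Hmin]].
  { intros k. destruct (oevalp (rp p k) [n] e); [left|right]; congruence. }
  { congruence. }
  exists k. split.
  - rewrite Ha. destruct (oevalp (rp p k) [n] e) eqn:E; [|congruence].
    apply oevalp_sound with (f := p) in E. rewrite E. reflexivity.
    intros t v. unfold rp. destruct (t <? k); congruence.
  - intros j Hj. rewrite Ha. specialize (Hmin j Hj).
    destruct (oevalp (rp p j) [n] e); auto. exfalso; apply Hmin; congruence.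
Qed.

Theorem assoc_expr (e : oexpr) : fvb 1 e = true ->
  exists alpha, computable_nat alpha /\ forall p : Baire, assoc_eval alpha p (fun n => oeval p [n] e).
Proof.
  intros H. exists (alpha_of e). split. apply alpha_of_computable. apply alpha_of_assoc; auto.
Qed.

Local Open Scope nat_scope.

Fixpoint sh (d c : nat) (e : oexpr) : oexpr :=
  match e with
  | OVar i => if i <? c then OVar i else OVar (i + d)
  | OConst n => OConst n
  | OAdd a b => OAdd (sh d c a) (sh d c b)
  | OSub a b => OSub (sh d c a) (sh d c b)
  | OMul a b => OMul (sh d c a) (sh d c b)
  | OIf x a b => OIf (sh d c x) (sh d c a) (sh d c b)
  | OLt a b => OLt (sh d c a) (sh d c b)
  | ORec n z s => ORec (sh d c n) (sh d c z) (sh d (S (S c)) s)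
  | OLet a b => OLet (sh d c a) (sh d (S c) b)
  | OOrc t => OOrc (sh d c t)
  end.

Lemma oeval_sh f : forall e pre mid env,
  oeval f (pre ++ mid ++ env) (sh (length mid) (length pre) e) = oeval f (pre ++ env) e.
Proof.
  induction e; intros pre mid env; cbn [sh oeval].
  - destruct (i <? length pre) eqn:E.
    + apply Nat.ltb_lt in E. cbn [oeval]. rewrite !app_nth1 by auto. reflexivity.
    + apply Nat.ltb_ge in E. cbn [oeval].
      rewrite (app_nth2 pre (mid ++ env)) by lia. rewrite (app_nth2 mid env) by lia.
      rewrite (app_nth2 pre env) by lia. f_equal. lia.
  - reflexivity.
  - rewrite IHe1, IHe2. reflexivity.
  - rewrite IHe1, IHe2. reflexivity.
  - rewrite IHe1, IHe2. reflexivity.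
  - rewrite IHe1, IHe2, IHe3. reflexivity.
  - rewrite IHe1, IHe2. reflexivity.
  - rewrite IHe1, IHe2. apply rec_iter_ext. intros i a.
    apply (IHe3 (i :: a :: pre)).
  - rewrite IHe1. apply (IHe2 (_ :: pre)).
  - rewrite IHe. reflexivity.
Qed.

Lemma oeval_sh1 f e x env : oeval f (x :: env) (sh 1 0 e) = oeval f env e.
Proof. apply (oeval_sh f e [] [x] env). Qed.

Lemma oeval_sh11 f e i a env : oeval f (i :: a :: env) (sh 1 1 e) = oeval f (i :: env) e.
Proof. apply (oeval_sh f e [i] [a] env). Qed.

Lemma oeval_fvb f : forall e env1 env2, fvb (length env1) e = true ->
  oeval f (env1 ++ env2) e = oeval f env1 e.
Proof.
  induction e; intros env1 env2 H; cbn [fvb oeval] in *;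
    repeat match goal with H : (_ && _) = true |- _ => apply andb_prop in H; destruct H end.
  - apply Nat.ltb_lt in H. rewrite app_nth1 by exact H. reflexivity.
  - reflexivity.
  - rewrite IHe1, IHe2 by auto. reflexivity.
  - rewrite IHe1, IHe2 by auto. reflexivity.
  - rewrite IHe1, IHe2 by auto. reflexivity.
  - rewrite IHe1, IHe2, IHe3 by auto. reflexivity.
  - rewrite IHe1, IHe2 by auto. reflexivity.
  - rewrite IHe1, IHe2 by auto. apply rec_iter_ext. intros i a. apply (IHe3 (i :: a :: env1)). simpl; auto.
  - rewrite IHe1 by auto. apply (IHe2 (_ :: env1)). auto.
  - rewrite IHe by auto. reflexivity.
Qed.

Fixpoint lets (args : list oexpr) (d : nat) (B : oexpr) : oexpr :=
  match args with [] => B | a :: r => OLet (sh d 0 a) (lets r (S d) B) end.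

Lemma lets_ok f B : forall args acc env0,
  oeval f (acc ++ env0) (lets args (length acc) B) = oeval f (rev (map (oeval f env0) args) ++ acc ++ env0) B.
Proof.
  induction args; intros acc env0; cbn [lets oeval].
  - reflexivity.
  - pose proof (oeval_sh f a [] acc env0) as Hs. simpl app in Hs. simpl length in Hs. rewrite Hs.
    pose proof (IHargs (oeval f env0 a :: acc) env0) as H. cbn [app length] in H. rewrite H.
    cbn [map rev]. rewrite <- app_assoc. reflexivity.
Qed.

Definition Call (B : oexpr) (args : list oexpr) : oexpr := lets (rev args) 0 B.

Lemma Call_ok f B args env : fvb (length args) B = true ->
  oeval f env (Call B args) = oeval f (map (oeval f env) args) B.
Proof.
  intros H. unfold Call. pose proof (lets_ok f B (rev args) [] env) as H2. cbn [app length] in H2.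
  rewrite H2. rewrite map_rev, rev_involutive. apply oeval_fvb. rewrite length_map. exact H.
Qed.

Ltac cs := repeat (first [rewrite Call_ok by reflexivity | progress cbn [map oeval nth]]).

Definition Ofirst (n P : oexpr) : oexpr :=
  ORec n (OConst 0) (OIf (OLt (OVar 1) (OVar 0)) (OVar 1) (OIf (sh 1 1 P) (OVar 0) (OAdd (OVar 0) (OConst 1)))).

Lemma Ofirst_ok f env n P :
  oeval f env (Ofirst n P) = firstb (fun i => negb (oeval f (i :: env) P =? 0)) (oeval f env n).
Proof.
  unfold Ofirst, firstb. cbn [oeval]. apply rec_iter_ext. intros i a. cbn [nth].
  rewrite oeval_sh11.
  destruct (a <? i); simpl; auto. destruct (oeval f (i :: env) P =? 0); simpl; auto. lia.
Qed.

Definition Obex (n P : oexpr) : oexpr :=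
  ORec n (OConst 0) (OIf (OVar 1) (OConst 1) (OIf (sh 1 1 P) (OConst 1) (OConst 0))).

Lemma Obex_ok f env n P :
  oeval f env (Obex n P) <> 0 <-> exists i, i < oeval f env n /\ oeval f (i :: env) P <> 0.
Proof.
  unfold Obex. cbn [oeval].
  erewrite rec_iter_ext; [| intros i a; cbn [nth]; rewrite oeval_sh11; reflexivity].
  generalize (oeval f env n) as N. induction N; cbn [rec_iter nth].
  - split. congruence. intros [i [Hi _]]. lia.
  - destruct (rec_iter _ _ N =? 0) eqn:E.
    + apply Nat.eqb_eq in E. rewrite E in IHN.
      destruct (oeval f (N :: env) P =? 0) eqn:E2.
      * apply Nat.eqb_eq in E2. split. congruence. intros [i [Hi Pi]].
        destruct (Nat.eq_dec i N). subst; congruence. apply IHN. exists i. split; auto. lia.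
      * apply Nat.eqb_neq in E2. split; auto. intros _. exists N. split; auto.
    + apply Nat.eqb_neq in E. split; auto. intros _. destruct (proj1 IHN E) as [i [Hi Pi]].
      exists i. split; auto.
Qed.

Definition Obfa (n P : oexpr) : oexpr :=
  ORec n (OConst 1) (OIf (OVar 1) (OIf (sh 1 1 P) (OConst 1) (OConst 0)) (OConst 0)).

Lemma Obfa_ok f env n P :
  oeval f env (Obfa n P) <> 0 <-> forall i, i < oeval f env n -> oeval f (i :: env) P <> 0.
Proof.
  unfold Obfa. cbn [oeval].
  erewrite rec_iter_ext; [| intros i a; cbn [nth]; rewrite oeval_sh11; reflexivity].
  generalize (oeval f env n) as N. induction N; cbn [rec_iter nth].
  - split. intros _ i Hi; lia. congruence.
  - destruct (rec_iter _ _ N =? 0) eqn:E.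
    + apply Nat.eqb_eq in E. rewrite E in IHN. split. congruence.
      intros H. exfalso. apply (proj2 IHN). intros i Hi. apply H. lia. reflexivity.
    + apply Nat.eqb_neq in E. destruct (oeval f (N :: env) P =? 0) eqn:E2.
      * apply Nat.eqb_eq in E2. split. congruence. intros H. exfalso. apply (H N); auto.
      * apply Nat.eqb_neq in E2. split; auto. intros _ i Hi.
        destruct (Nat.eq_dec i N). subst; auto. apply (proj1 IHN E). lia.
Qed.

Definition Oand (a b : oexpr) : oexpr := OIf a (OIf b (OConst 1) (OConst 0)) (OConst 0).
Lemma Oand_ok f env a b : oeval f env (Oand a b) <> 0 <-> oeval f env a <> 0 /\ oeval f env b <> 0.
Proof.
  unfold Oand. cbn [oeval]. destruct (oeval f env a =? 0) eqn:E1; destruct (oeval f env b =? 0) eqn:E2;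
  rewrite ?Nat.eqb_eq, ?Nat.eqb_neq in *; split; intros; try tauto; try congruence; lia.
Qed.
Definition Onot (a : oexpr) : oexpr := OIf a (OConst 0) (OConst 1).
Lemma Onot_ok f env a : oeval f env (Onot a) <> 0 <-> oeval f env a = 0.
Proof.
  unfold Onot. cbn [oeval]. destruct (oeval f env a =? 0) eqn:E1; rewrite ?Nat.eqb_eq, ?Nat.eqb_neq in *;
  split; intros; try congruence; lia.
Qed.

Definition F_tri : oexpr := ORec (OVar 0) (OConst 0) (OAdd (OAdd (OVar 0) (OConst 1)) (OVar 1)).
Lemma F_tri_ok f t : oeval f [t] F_tri = tri t.
Proof. reflexivity. Qed.

Definition F_diag : oexpr :=
  Ofirst (OAdd (OVar 0) (OConst 1)) (OLt (OVar 1) (Call F_tri [OAdd (OVar 0) (OConst 1)])).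
Lemma firstb_ext P Q N : (forall i, P i = Q i) -> firstb P N = firstb Q N.
Proof. intros H. unfold firstb. apply rec_iter_ext. intros. rewrite H. reflexivity. Qed.
Lemma negb_b2n (b : bool) : negb ((if b then 1 else 0) =? 0) = b.
Proof. destruct b; reflexivity. Qed.

Lemma F_tri_fvb : fvb 1 F_tri = true. Proof. reflexivity. Qed.

Lemma F_diag_ok f n : oeval f [n] F_diag = diag n.
Proof.
  unfold F_diag. rewrite Ofirst_ok. unfold diag. cbn [oeval nth]. rewrite Nat.add_1_r.
  apply firstb_ext. intros i. cs.
  rewrite Nat.add_1_r, F_tri_ok. apply negb_b2n.
Qed.

Definition F_u2 : oexpr := OSub (OVar 0) (Call F_tri [Call F_diag [OVar 0]]).
Definition F_u1 : oexpr := OSub (Call F_diag [OVar 0]) (Call F_u2 [OVar 0]).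
Lemma F_u2_ok f n : oeval f [n] F_u2 = snd (nunpair n).
Proof.
  unfold F_u2. cbn [oeval nth]. cs.
  rewrite F_diag_ok, F_tri_ok, unpair_ok. reflexivity.
Qed.
Lemma F_u1_ok f n : oeval f [n] F_u1 = fst (nunpair n).
Proof.
  unfold F_u1. cbn [oeval nth]. cs.
  rewrite F_diag_ok, F_u2_ok, unpair_ok. reflexivity.
Qed.

Definition F_div2 : oexpr :=
  Ofirst (OAdd (OVar 0) (OConst 1)) (OLt (OVar 1) (OAdd (OMul (OConst 2) (OVar 0)) (OConst 2))).
Lemma F_div2_ok f a : oeval f [a] F_div2 = Nat.div2 a.
Proof.
  unfold F_div2. rewrite Ofirst_ok. cbn [oeval nth].
  apply firstb_eq.
  - pose proof (Nat.div2_odd a). destruct (Nat.odd a); simpl in *; lia.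
  - rewrite negb_b2n. apply Nat.ltb_lt. pose proof (Nat.div2_odd a). destruct (Nat.odd a); simpl in *; lia.
  - intros i Hi. rewrite negb_b2n. apply Nat.ltb_ge. pose proof (Nat.div2_odd a). destruct (Nat.odd a); simpl in *; lia.
Qed.

Definition F_even : oexpr := OIf (OSub (OVar 0) (OMul (OConst 2) (Call F_div2 [OVar 0]))) (OConst 0) (OConst 1).
Lemma F_even_ok f a : oeval f [a] F_even = if Nat.even a then 1 else 0.
Proof.
  unfold F_even. cbn [oeval nth]. cs. rewrite F_div2_ok.
  pose proof (Nat.div2_odd a). rewrite <- Nat.negb_odd. destruct (Nat.odd a); simpl in *.
  - replace (a - (Nat.div2 a + (Nat.div2 a + 0))) with 1 by lia. reflexivity.
  - replace (a - (Nat.div2 a + (Nat.div2 a + 0))) with 0 by lia. reflexivity.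
Qed.

Definition F_pow2 : oexpr := ORec (OVar 0) (OConst 1) (OAdd (OVar 1) (OVar 1)).
Lemma F_pow2_ok f n : oeval f [n] F_pow2 = 2 ^ n.
Proof.
  unfold F_pow2. cbn [oeval nth]. induction n; cbn [rec_iter]. reflexivity.
  rewrite IHn. simpl. lia.
Qed.

Definition zP (a : nat) : nat := if Nat.even a then Nat.div2 a else 0.
Definition zM (a : nat) : nat := if Nat.even a then 0 else S (Nat.div2 a).
Definition F_zP : oexpr := OIf (Call F_even [OVar 0]) (Call F_div2 [OVar 0]) (OConst 0).
Definition F_zM : oexpr := OIf (Call F_even [OVar 0]) (OConst 0) (OAdd (Call F_div2 [OVar 0]) (OConst 1)).
Lemma F_zP_ok f a : oeval f [a] F_zP = zP a.
Proof.
  unfold F_zP, zP. cbn [oeval nth]. cs.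
  rewrite F_even_ok, F_div2_ok. destruct (Nat.even a); reflexivity.
Qed.
Lemma F_zM_ok f a : oeval f [a] F_zM = zM a.
Proof.
  unfold F_zM, zM. cbn [oeval nth]. cs.
  rewrite F_even_ok, F_div2_ok. destruct (Nat.even a); simpl; lia.
Qed.

Definition qP (c : nat) : nat := zP (fst (nunpair c)).
Definition qM (c : nat) : nat := zM (fst (nunpair c)).
Definition qD (c : nat) : nat := S (snd (nunpair c)).
Definition F_qP : oexpr := Call F_zP [Call F_u1 [OVar 0]].
Definition F_qM : oexpr := Call F_zM [Call F_u1 [OVar 0]].
Definition F_qD : oexpr := OAdd (Call F_u2 [OVar 0]) (OConst 1).
Lemma F_qP_ok f c : oeval f [c] F_qP = qP c.
Proof. unfold F_qP. cs. cs. rewrite F_u1_ok, F_zP_ok. reflexivity. Qed.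
Lemma F_qM_ok f c : oeval f [c] F_qM = qM c.
Proof. unfold F_qM. cs. cs. rewrite F_u1_ok, F_zM_ok. reflexivity. Qed.
Lemma F_qD_ok f c : oeval f [c] F_qD = qD c.
Proof. unfold F_qD. cbn [oeval]. cs.
  rewrite F_u2_ok. unfold qD. lia. Qed.

Local Open Scope nat_scope.

Notation c2 := (OConst 2).
Definition mltq (P1 M1 D1 P2 M2 D2 : oexpr) : oexpr :=
  OLt (OAdd (OMul P1 D2) (OMul M2 D1)) (OAdd (OMul P2 D1) (OMul M1 D2)).
Definition ltqn (P1 M1 D1 P2 M2 D2 : nat) : Prop := P1 * D2 + M2 * D1 < P2 * D1 + M1 * D2.
Lemma mltq_ok f env P1 M1 D1 P2 M2 D2 :
  oeval f env (mltq P1 M1 D1 P2 M2 D2) <> 0 <->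
  ltqn (oeval f env P1) (oeval f env M1) (oeval f env D1) (oeval f env P2) (oeval f env M2) (oeval f env D2).
Proof.
  unfold mltq, ltqn. cbn [oeval]. destruct (_ <? _) eqn:E.
  - apply Nat.ltb_lt in E. split; auto.
  - apply Nat.ltb_ge in E. split; intros; [congruence|lia].
Qed.

Definition xP (f : nat -> nat) (N : nat) := qP (f (2 * N)).
Definition xM (f : nat -> nat) (N : nat) := qM (f (2 * N)).
Definition xD (f : nat -> nat) (N : nat) := qD (f (2 * N)).
Definition ivl (f : nat -> nat) (l : nat) := f (2 * l + 1).
Definition loc (c : nat) := fst (nunpair c).
Definition hic (c : nat) := snd (nunpair c).

Definition mxP (N : oexpr) := Call F_qP [OOrc (OMul c2 N)].
Definition mxM (N : oexpr) := Call F_qM [OOrc (OMul c2 N)].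
Definition mxD (N : oexpr) := Call F_qD [OOrc (OMul c2 N)].
Lemma mx_ok f env N :
  oeval f env (mxP N) = xP f (oeval f env N) /\ oeval f env (mxM N) = xM f (oeval f env N) /\
  oeval f env (mxD N) = xD f (oeval f env N).
Proof.
  unfold mxP, mxM, mxD, xP, xM, xD. cs. rewrite F_qP_ok, F_qM_ok, F_qD_ok. auto.
Qed.
Definition miv (L : oexpr) := OOrc (OAdd (OMul c2 L) (OConst 1)).
Definition mlo (L : oexpr) := Call F_u1 [OSub (miv L) (OConst 1)].
Definition mhi (L : oexpr) := Call F_u2 [OSub (miv L) (OConst 1)].
Definition mP (c : oexpr) := Call F_qP [c].
Definition mM (c : oexpr) := Call F_qM [c].
Definition mD (c : oexpr) := Call F_qD [c].
Lemma miv_ok f env L : oeval f env (miv L) = ivl f (oeval f env L).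
Proof. reflexivity. Qed.
Lemma mlo_ok f env L : oeval f env (mlo L) = loc (ivl f (oeval f env L) - 1).
Proof. unfold mlo. cs. rewrite F_u1_ok. reflexivity. Qed.
Lemma mhi_ok f env L : oeval f env (mhi L) = hic (ivl f (oeval f env L) - 1).
Proof. unfold mhi. cs. rewrite F_u2_ok. reflexivity. Qed.
Lemma mq_ok f env c :
  oeval f env (mP c) = qP (oeval f env c) /\ oeval f env (mM c) = qM (oeval f env c) /\
  oeval f env (mD c) = qD (oeval f env c).
Proof. unfold mP, mM, mD. cs. rewrite F_qP_ok, F_qM_ok, F_qD_ok. auto. Qed.
Definition mpow2 (a : oexpr) := Call F_pow2 [a].
Lemma mpow2_ok f env a : oeval f env (mpow2 a) = 2 ^ oeval f env a.
Proof. unfold mpow2. cs. apply F_pow2_ok. Qed.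

Definition F_cell : oexpr :=
  let L := OVar 0 in let G := OVar 1 in let K := OVar 2 in let N := OVar 3 in let J := OVar 4 in
  let PK := mpow2 K in
  let S := OMul J (mpow2 (OSub K N)) in
  let XP := mxP N in let XM := mxM N in let XD := mxD N in
  let gmP := OAdd (OMul XP PK) (OMul G XD) in
  let gmM := OAdd (OAdd (OMul XM PK) (OMul S XD)) XD in
  let gD := OMul XD PK in
  let gpP := OAdd (OAdd (OMul XP PK) (OMul G XD)) XD in
  let gpM := OAdd (OMul XM PK) (OMul S XD) in
  Oand (miv L) (Oand (mltq (mP (mlo L)) (mM (mlo L)) (mD (mlo L)) gmP gmM gD)
                     (mltq gpP gpM gD (mP (mhi L)) (mM (mhi L)) (mD (mhi L)))).

Definition cellP (f : nat -> nat) (l g k N j : nat) : Prop :=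
  let PK := 2 ^ k in let S := j * 2 ^ (k - N) in
  let gmP := xP f N * PK + g * xD f N in
  let gmM := xM f N * PK + S * xD f N + xD f N in
  let gD := xD f N * PK in
  let gpP := xP f N * PK + g * xD f N + xD f N in
  let gpM := xM f N * PK + S * xD f N in
  let a := loc (ivl f l - 1) in let b := hic (ivl f l - 1) in
  ivl f l <> 0 /\ ltqn (qP a) (qM a) (qD a) gmP gmM gD /\ ltqn gpP gpM gD (qP b) (qM b) (qD b).

Lemma F_cell_ok f l g k N j : oeval f [l; g; k; N; j] F_cell <> 0 <-> cellP f l g k N j.
Proof.
  unfold F_cell, cellP. rewrite !Oand_ok, !mltq_ok.
  destruct (mx_ok f [l; g; k; N; j] (OVar 3)) as (E1 & E2 & E3).
  destruct (mq_ok f [l; g; k; N; j] (mlo (OVar 0))) as (E4 & E5 & E6).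
  destruct (mq_ok f [l; g; k; N; j] (mhi (OVar 0))) as (E7 & E8 & E9).
  cbn [oeval]. rewrite E1, E2, E3, E4, E5, E6, E7, E8, E9, !mpow2_ok, mlo_ok, mhi_ok, miv_ok.
  cbn [oeval nth]. tauto.
Qed.

Definition F_T : oexpr :=
  OIf (OLt (OVar 0) (OVar 1)) (OConst 0)
    (Obfa (OAdd (OMul (OMul c2 (OVar 2)) (mpow2 (OSub (OVar 0) (OVar 1)))) (OConst 1))
       (Obex (OVar 1) (Call F_cell [OVar 0; OVar 1; OVar 2; OVar 3; OVar 4]))).
Definition TP (f : nat -> nat) (k N j : nat) : Prop :=
  N <= k /\ forall g, g < 2 * j * 2 ^ (k - N) + 1 -> exists l, l < k /\ cellP f l g k N j.
Lemma F_T_ok f k N j : oeval f [k; N; j] F_T <> 0 <-> TP f k N j.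
Proof.
  unfold F_T, TP. cbn [oeval nth]. destruct (k <? N) eqn:E.
  - apply Nat.ltb_lt in E. cbn [Nat.eqb]. split; intros; [congruence|lia].
  - apply Nat.ltb_ge in E. cbn [Nat.eqb]. rewrite Obfa_ok. cbn [oeval nth]. rewrite mpow2_ok. cbn [oeval nth].
    split.
    + intros H. split; auto. intros g Hg. specialize (H g Hg). rewrite Obex_ok in H.
      destruct H as [l [Hl Hc]]. cbn [oeval nth] in Hl. revert Hc. cs. rewrite F_cell_ok. eauto.
    + intros [_ H] g Hg. rewrite Obex_ok. destruct (H g Hg) as [l [Hl Hc]]. exists l. split. exact Hl.
      cs. rewrite F_cell_ok. exact Hc.
Qed.

Definition F_E : oexpr := Obfa (OAdd (OVar 0) (OConst 1)) (Onot (Call F_T [OVar 0; OVar 2; OVar 3])).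
Definition EP (f : nat -> nat) (k N j : nat) : Prop := forall k', k' < k + 1 -> ~ TP f k' N j.
Lemma F_E_ok f k N j : oeval f [k; N; j] F_E <> 0 <-> EP f k N j.
Proof.
  unfold F_E, EP. rewrite Obfa_ok. cbn [oeval nth]. split.
  - intros H k' Hk HT. specialize (H k' Hk). rewrite Onot_ok in H. revert H. cs.
    intros H. apply F_T_ok in HT. congruence.
  - intros H k' Hk. rewrite Onot_ok. cs. specialize (H k' Hk).
    destruct (oeval f [k'; N; j] F_T) eqn:E; auto. exfalso. apply H. apply F_T_ok. congruence.
Qed.

Definition jstar (f : nat -> nat) (k N : nat) : nat := firstb (fun j => negb (oeval f [k; N; j] F_E =? 0)) (k + 1).
Definition F_js : oexpr := Ofirst (OAdd (OVar 0) (OConst 1)) (Call F_E [OVar 1; OVar 2; OVar 0]).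
Lemma F_js_ok f k N : oeval f [k; N] F_js = jstar f k N.
Proof.
  unfold F_js, jstar. rewrite Ofirst_ok. cbn [oeval nth]. apply firstb_ext. intros j. cs. reflexivity.
Qed.

Definition mN := OAdd (OVar 2) c2.
Definition F_cP : oexpr :=
  OIf (OVar 1) (OAdd (OMul (mxP mN) (mpow2 mN)) (OMul (OVar 0) (mxD mN))) (OMul (mxP mN) (mpow2 mN)).
Definition F_cM : oexpr :=
  OIf (OVar 1) (OMul (mxM mN) (mpow2 mN)) (OAdd (OMul (mxM mN) (mpow2 mN)) (OMul (OVar 0) (mxD mN))).
Definition F_cD : oexpr := OMul (mxD mN) (mpow2 mN).
Definition cPs (f : nat -> nat) (J s m : nat) : nat :=
  if s =? 0 then xP f (m + 2) * 2 ^ (m + 2) else xP f (m + 2) * 2 ^ (m + 2) + J * xD f (m + 2).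
Definition cMs (f : nat -> nat) (J s m : nat) : nat :=
  if s =? 0 then xM f (m + 2) * 2 ^ (m + 2) + J * xD f (m + 2) else xM f (m + 2) * 2 ^ (m + 2).
Definition cDs (f : nat -> nat) (m : nat) : nat := xD f (m + 2) * 2 ^ (m + 2).
Lemma F_c_ok f J s m :
  oeval f [J; s; m] F_cP = cPs f J s m /\ oeval f [J; s; m] F_cM = cMs f J s m /\
  oeval f [J; s; m] F_cD = cDs f m.
Proof.
  destruct (mx_ok f [J; s; m] mN) as (E1 & E2 & E3).
  unfold F_cP, F_cM, F_cD, cPs, cMs, cDs. cbn [oeval nth]. rewrite E1, E2, E3, mpow2_ok.
  unfold mN. cbn [oeval nth]. destruct (s =? 0); auto.
Qed.

Definition DP (f : nat -> nat) (jf : nat -> nat) (s m : nat) : Prop :=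
  let J := jf (m + 2) in
  let CP := cPs f J s m in let CM := cMs f J s m in let CD := cDs f m in
  exists l, l < m + 1 /\ ivl f l <> 0 /\
    ltqn (qP (loc (ivl f l - 1))) (qM (loc (ivl f l - 1))) (qD (loc (ivl f l - 1)))
         (CP * 2 ^ m) (CM * 2 ^ m + CD) (CD * 2 ^ m) /\
    ltqn (CP * 2 ^ m + CD) (CM * 2 ^ m) (CD * 2 ^ m)
         (qP (hic (ivl f l - 1))) (qM (hic (ivl f l - 1))) (qD (hic (ivl f l - 1))).

Definition F_D : oexpr :=
  let Jx := Call F_js [OVar 1; OAdd (OVar 3) c2] in
  let CP := Call F_cP [Jx; OVar 2; OVar 3] in
  let CM := Call F_cM [Jx; OVar 2; OVar 3] in
  let CD := Call F_cD [Jx; OVar 2; OVar 3] in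
  let M2 := mpow2 (OVar 3) in
  let L := OVar 0 in
  Obex (OAdd (OVar 2) (OConst 1))
    (Oand (miv L) (Oand (mltq (mP (mlo L)) (mM (mlo L)) (mD (mlo L)) (OMul CP M2) (OAdd (OMul CM M2) CD) (OMul CD M2))
                        (mltq (OAdd (OMul CP M2) CD) (OMul CM M2) (OMul CD M2) (mP (mhi L)) (mM (mhi L)) (mD (mhi L))))).

Lemma F_D_ok f k s m : oeval f [k; s; m] F_D <> 0 <-> DP f (jstar f k) s m.
Proof.
  unfold F_D, DP. rewrite Obex_ok. cbn [oeval nth].
  assert (HB : forall l, oeval f [l; k; s; m]
    (Oand (miv (OVar 0))
       (Oand
          (mltq (mP (mlo (OVar 0))) (mM (mlo (OVar 0))) (mD (mlo (OVar 0)))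
             (OMul (Call F_cP [Call F_js [OVar 1; OAdd (OVar 3) c2]; OVar 2; OVar 3]) (mpow2 (OVar 3)))
             (OAdd (OMul (Call F_cM [Call F_js [OVar 1; OAdd (OVar 3) c2]; OVar 2; OVar 3]) (mpow2 (OVar 3)))
                (Call F_cD [Call F_js [OVar 1; OAdd (OVar 3) c2]; OVar 2; OVar 3]))
             (OMul (Call F_cD [Call F_js [OVar 1; OAdd (OVar 3) c2]; OVar 2; OVar 3]) (mpow2 (OVar 3))))
          (mltq
             (OAdd (OMul (Call F_cP [Call F_js [OVar 1; OAdd (OVar 3) c2]; OVar 2; OVar 3]) (mpow2 (OVar 3)))
                (Call F_cD [Call F_js [OVar 1; OAdd (OVar 3) c2]; OVar 2; OVar 3]))
             (OMul (Call F_cM [Call F_js [OVar 1; OAdd (OVar 3) c2]; OVar 2; OVar 3]) (mpow2 (OVar 3)))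
             (OMul (Call F_cD [Call F_js [OVar 1; OAdd (OVar 3) c2]; OVar 2; OVar 3]) (mpow2 (OVar 3)))
             (mP (mhi (OVar 0))) (mM (mhi (OVar 0))) (mD (mhi (OVar 0)))))) <> 0 <->
    (ivl f l <> 0 /\
    ltqn (qP (loc (ivl f l - 1))) (qM (loc (ivl f l - 1))) (qD (loc (ivl f l - 1)))
         (cPs f (jstar f k (m + 2)) s m * 2 ^ m) (cMs f (jstar f k (m + 2)) s m * 2 ^ m + cDs f m) (cDs f m * 2 ^ m) /\
    ltqn (cPs f (jstar f k (m + 2)) s m * 2 ^ m + cDs f m) (cMs f (jstar f k (m + 2)) s m * 2 ^ m) (cDs f m * 2 ^ m)
         (qP (hic (ivl f l - 1))) (qM (hic (ivl f l - 1))) (qD (hic (ivl f l - 1))))).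
  { intros l. rewrite !Oand_ok, !mltq_ok.
    destruct (mq_ok f [l; k; s; m] (mlo (OVar 0))) as (E4 & E5 & E6).
    destruct (mq_ok f [l; k; s; m] (mhi (OVar 0))) as (E7 & E8 & E9).
    rewrite E4, E5, E6, E7, E8, E9, mlo_ok, mhi_ok, miv_ok.
    cbn [oeval nth]. rewrite !mpow2_ok. cbn [oeval nth].
    rewrite !(Call_ok f F_cP) by reflexivity. rewrite !(Call_ok f F_cM) by reflexivity.
    rewrite !(Call_ok f F_cD) by reflexivity. cbn [map oeval nth].
    rewrite !(Call_ok f F_js) by reflexivity. cbn [map oeval nth].
    rewrite F_js_ok. destruct (F_c_ok f (jstar f k (m + 2)) s m) as (C1 & C2 & C3).
    rewrite C1, C2, C3. tauto. }
  split.
  - intros [l [Hl H]]. exists l. split; auto. apply HB; auto.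
  - intros [l [Hl H]]. exists l. split; auto. apply HB; auto.
Qed.

Definition F_fire : oexpr :=
  Oand (Call F_D [OVar 0; OVar 1; OVar 2]) (Obfa (OVar 2) (Onot (Call F_D [OVar 1; OVar 2; OVar 0]))).
Lemma F_fire_ok f k s m : oeval f [k; s; m] F_fire <> 0 <->
  DP f (jstar f k) s m /\ forall m', m' < m -> ~ DP f (jstar f k) s m'.
Proof.
  unfold F_fire. rewrite Oand_ok, Obfa_ok. cs. rewrite F_D_ok. cbn [oeval nth].
  split; intros [H1 H2]; split; auto.
  - intros m' Hm HD. specialize (H2 m' Hm). rewrite Onot_ok in H2. revert H2. cs. intros H2.
    apply F_D_ok in HD. congruence.
  - intros m' Hm. rewrite Onot_ok. cs. destruct (oeval f [k; s; m'] F_D) eqn:E; auto.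
    exfalso. apply (H2 m' Hm). apply F_D_ok. congruence.
Qed.
Lemma Oand_01 f env a b : oeval f env (Oand a b) = 0 \/ oeval f env (Oand a b) = 1.
Proof. unfold Oand. cbn [oeval]. destruct (_ =? 0); [|destruct (_ =? 0)]; auto. Qed.
Lemma F_fire_01 f k s m : oeval f [k; s; m] F_fire = 0 \/ oeval f [k; s; m] F_fire = 1.
Proof. apply Oand_01. Qed.

Definition zig (P M : nat) : nat := if M <=? P then 2 * (P - M) else 2 * (M - P) - 1.
Definition enc_out (P M D : nat) : nat := npair (zig P M) (D - 1).
Definition F_zig : oexpr :=
  OIf (OLt (OVar 0) (OVar 1)) (OSub (OMul c2 (OSub (OVar 1) (OVar 0))) (OConst 1)) (OMul c2 (OSub (OVar 0) (OVar 1))).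
Definition F_npair : oexpr := OAdd (OVar 1) (Call F_tri [OAdd (OVar 1) (OVar 0)]).
Definition F_enc : oexpr := Call F_npair [Call F_zig [OVar 0; OVar 1]; OSub (OVar 2) (OConst 1)].
Lemma F_enc_ok f P M D : oeval f [P; M; D] F_enc = enc_out P M D.
Proof.
  assert (Z : oeval f [P; M] F_zig = zig P M).
  { unfold F_zig, zig; cbn [oeval nth]; destruct (P <? M) eqn:E; destruct (M <=? P) eqn:E2;
    rewrite ?Nat.ltb_lt, ?Nat.ltb_ge, ?Nat.leb_le, ?Nat.leb_gt in *; cbn [Nat.eqb]; lia. }
  unfold F_enc, enc_out. cs. rewrite Z. unfold F_npair. cs. rewrite F_tri_ok.
  unfold npair. rewrite to_nat_tri. reflexivity.
Qed.

Definition F_out : oexpr :=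
  let Jx := Call F_js [OVar 0; OAdd (OVar 2) c2] in
  Call F_enc [Call F_cP [Jx; OVar 1; OVar 2]; Call F_cM [Jx; OVar 1; OVar 2]; Call F_cD [Jx; OVar 1; OVar 2]].
Lemma F_out_ok f k s m : oeval f [k; s; m] F_out =
  enc_out (cPs f (jstar f k (m + 2)) s m) (cMs f (jstar f k (m + 2)) s m) (cDs f m).
Proof.
  unfold F_out. cs. rewrite F_js_ok. destruct (F_c_ok f (jstar f k (m + 2)) s m) as (C1 & C2 & C3).
  rewrite C1, C2, C3, F_enc_ok. reflexivity.
Qed.

Definition F_main : oexpr :=
  let K := Call F_u1 [OVar 0] in
  let I := Call F_u2 [OVar 0] in
  let H := Call F_div2 [I] in
  let H2 := Call F_div2 [H] in
  let side := OIf (Call F_even [H]) (OConst 0) (OConst 1) in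
  OIf (Call F_even [I]) (Call F_fire [K; side; H2]) (Call F_out [K; side; H2]).

Definition sideof (h : nat) : nat := if Nat.even h then 0 else 1.
Lemma F_main_ok f w : oeval f [w] F_main =
  let k := fst (nunpair w) in let i := snd (nunpair w) in
  let h := Nat.div2 i in
  if Nat.even i then oeval f [k; sideof h; Nat.div2 h] F_fire
  else enc_out (cPs f (jstar f k (Nat.div2 h + 2)) (sideof h) (Nat.div2 h))
               (cMs f (jstar f k (Nat.div2 h + 2)) (sideof h) (Nat.div2 h)) (cDs f (Nat.div2 h)).
Proof.
  unfold F_main. cbn [oeval]. cs. rewrite F_u1_ok, F_u2_ok, !F_div2_ok, !F_even_ok.
  unfold sideof. cbn zeta.
  destruct (Nat.even (snd (nunpair w))); cbn [Nat.eqb]; cs; rewrite ?F_div2_ok, ?F_even_ok, ?F_out_ok;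
  destruct (Nat.even (Nat.div2 (snd (nunpair w)))); reflexivity.
Qed.

Lemma F_main_fvb : fvb 1 F_main = true.
Proof. vm_compute. reflexivity. Qed.

Local Open Scope R_scope.

Definition tv (P M D : nat) : R := (INR P - INR M) / INR D.

Lemma nat_to_Z_zPM a : nat_to_Z a = (Z.of_nat (zP a) - Z.of_nat (zM a))%Z.
Proof.
  unfold nat_to_Z, zP, zM. destruct (Nat.even a); lia.
Qed.

Lemma qv_ok c : Q2R (nat_to_Q c) = tv (qP c) (qM c) (qD c).
Proof.
  unfold nat_to_Q, tv, qP, qM, qD. destruct (nunpair c) as [a b]. simpl fst; simpl snd.
  unfold Q2R. simpl Qnum; simpl Qden. rewrite nat_to_Z_zPM.
  rewrite minus_IZR, <- !INR_IZR_INZ.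
  replace (IZR (Z.pos (Pos.of_succ_nat b))) with (INR (S b)). reflexivity.
  rewrite INR_IZR_INZ. f_equal.
Qed.


Lemma even_2x x : Nat.even (2 * x) = true.
Proof. rewrite Nat.even_mul. reflexivity. Qed.
Lemma div2_2x x : Nat.div2 (2 * x) = x.
Proof. apply Nat.div2_double. Qed.
Lemma even_2x1 x : Nat.even (2 * x + 1) = false.
Proof. rewrite Nat.even_add, even_2x. reflexivity. Qed.
Lemma div2_2x1 x : Nat.div2 (2 * x + 1) = x.
Proof. rewrite Nat.add_1_r. apply Nat.div2_succ_double. Qed.

Lemma enc_out_ok P M D : (1 <= D)%nat -> Q2R (nat_to_Q (enc_out P M D)) = tv P M D.
Proof.
  intros HD. rewrite qv_ok. unfold enc_out, qP, qM, qD. rewrite unpair_npair.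
  simpl fst; simpl snd. replace (S (D - 1)) with D by lia. unfold tv. f_equal.
  unfold zig, zP, zM. destruct (M <=? P)%nat eqn:E.
  - apply Nat.leb_le in E. rewrite even_2x, div2_2x. rewrite minus_INR by lia. simpl. lra.
  - apply Nat.leb_gt in E. replace (2 * (M - P) - 1)%nat with (2 * (M - P - 1) + 1)%nat by lia.
    rewrite even_2x1, div2_2x1. replace (S (M - P - 1)) with (M - P)%nat by lia.
    rewrite minus_INR by lia. simpl. lra.
Qed.

Lemma ltq_ok P1 M1 D1 P2 M2 D2 : (1 <= D1)%nat -> (1 <= D2)%nat ->
  ((P1 * D2 + M2 * D1 < P2 * D1 + M1 * D2)%nat <-> (tv P1 M1 D1 < tv P2 M2 D2)%R).
Proof.
  intros H1 H2. unfold tv.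
  assert (d1 : 0 < INR D1) by (apply lt_0_INR; lia).
  assert (d2 : 0 < INR D2) by (apply lt_0_INR; lia).
  assert (E : (INR P1 - INR M1) / INR D1 < (INR P2 - INR M2) / INR D2 <->
              (INR P1 - INR M1) * INR D2 < (INR P2 - INR M2) * INR D1).
  { split; intros H.
    - apply Rmult_lt_reg_r with (/ (INR D1 * INR D2)). apply Rinv_0_lt_compat; nra.
      replace ((INR P1 - INR M1) * INR D2 * / (INR D1 * INR D2)) with ((INR P1 - INR M1) / INR D1) by (field; lra).
      replace ((INR P2 - INR M2) * INR D1 * / (INR D1 * INR D2)) with ((INR P2 - INR M2) / INR D2) by (field; lra).
      exact H.
    - replace ((INR P1 - INR M1) / INR D1) with ((INR P1 - INR M1) * INR D2 * / (INR D1 * INR D2)) by (field; lra).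
      replace ((INR P2 - INR M2) / INR D2) with ((INR P2 - INR M2) * INR D1 * / (INR D1 * INR D2)) by (field; lra).
      apply Rmult_lt_compat_r; auto. apply Rinv_0_lt_compat; nra. }
  rewrite E. split; intros H.
  - apply lt_INR in H. rewrite !plus_INR, !mult_INR in H. lra.
  - apply INR_lt. rewrite !plus_INR, !mult_INR. lra.
Qed.

Local Open Scope R_scope.

Definition X (f : nat -> nat) (N : nat) : R := tv (xP f N) (xM f N) (xD f N).
Definition LO (c : nat) : R := Q2R (nat_to_Q (loc c)).
Definition HI (c : nat) : R := Q2R (nat_to_Q (hic c)).

Lemma qD_pos c : (1 <= qD c)%nat.
Proof. unfold qD. lia. Qed.
Lemma xD_pos f N : (1 <= xD f N)%nat.
Proof. apply qD_pos. Qed.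

Lemma X_ok f N : X f N = Q2R (nat_to_Q (f (2 * N)%nat)).
Proof. unfold X, xP, xM, xD. rewrite qv_ok. reflexivity. Qed.

Lemma pow2_pos k : 0 < 2 ^ k.
Proof. apply pow_lt. lra. Qed.
Lemma INR_pow2 k : INR (2 ^ k) = 2 ^ k.
Proof. rewrite pow_INR. simpl. f_equal. Qed.

Lemma tv_shift P M D K a b : (1 <= D)%nat -> (1 <= K)%nat ->
  tv (P * K + a * D) (M * K + b * D) (D * K) = tv P M D + (INR a - INR b) / INR K.
Proof.
  intros HD HK. unfold tv. rewrite !plus_INR, !mult_INR.
  assert (0 < INR D) by (apply lt_0_INR; lia). assert (0 < INR K) by (apply lt_0_INR; lia).
  field. lra.
Qed.

Lemma pow2_split k N : (N <= k)%nat -> 2 ^ k = 2 ^ (k - N) * 2 ^ N.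
Proof. intros H. rewrite <- pow_add. f_equal. lia. Qed.

Lemma cell_real f l g k N j : (N <= k)%nat ->
  (cellP f l g k N j <-> exists code, ivl f l = S code /\
     LO code < X f N - INR j / 2 ^ N + INR g / 2 ^ k - / 2 ^ k /\
     X f N - INR j / 2 ^ N + INR g / 2 ^ k + / 2 ^ k < HI code).
Proof.
  intros HNk. unfold cellP.
  assert (HK : (1 <= 2 ^ k)%nat) by (pose proof (Nat.pow_nonzero 2 k); lia).
  assert (Hs : INR (j * 2 ^ (k - N)) / INR (2 ^ k) = INR j / 2 ^ N).
  { rewrite mult_INR, !INR_pow2, (pow2_split k N HNk). pose proof (pow2_pos N). pose proof (pow2_pos (k - N)). field. lra. }
  assert (Hgm : tv (xP f N * 2 ^ k + g * xD f N) (xM f N * 2 ^ k + j * 2 ^ (k - N) * xD f N + xD f N) (xD f N * 2 ^ k)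
                = X f N - INR j / 2 ^ N + INR g / 2 ^ k - / 2 ^ k).
  { replace (xM f N * 2 ^ k + j * 2 ^ (k - N) * xD f N + xD f N)%nat with (xM f N * 2 ^ k + (j * 2 ^ (k - N) + 1) * xD f N)%nat by lia.
    rewrite tv_shift by (auto using xD_pos). unfold X. rewrite plus_INR. unfold Rdiv in *.
    rewrite Rmult_minus_distr_r, Rmult_plus_distr_r, Hs, INR_pow2. simpl INR. lra. }
  assert (Hgp : tv (xP f N * 2 ^ k + g * xD f N + xD f N) (xM f N * 2 ^ k + j * 2 ^ (k - N) * xD f N) (xD f N * 2 ^ k)
                = X f N - INR j / 2 ^ N + INR g / 2 ^ k + / 2 ^ k).
  { replace (xP f N * 2 ^ k + g * xD f N + xD f N)%nat with (xP f N * 2 ^ k + (g + 1) * xD f N)%nat by lia.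
    rewrite tv_shift by (auto using xD_pos). unfold X. rewrite plus_INR. unfold Rdiv in *.
    rewrite Rmult_minus_distr_r, Rmult_plus_distr_r, Hs, INR_pow2. simpl INR. lra. }
  unfold ltqn. rewrite !ltq_ok by (auto using qD_pos; pose proof (xD_pos f N); lia).
  rewrite Hgm, Hgp. unfold LO, HI. rewrite <- !qv_ok.
  split.
  - intros (H1 & H2 & H3). exists (ivl f l - 1)%nat. split. lia. auto.
  - intros (code & E & H2 & H3). rewrite E. replace (S code - 1)%nat with code by lia. split. lia. auto.
Qed.

Local Open Scope R_scope.

Definition Good (f : nat -> nat) (eps : R) (K : nat) (y : R) : Prop :=
  exists l code, (l < K)%nat /\ ivl f l = S code /\ LO code < y - eps /\ y + eps < HI code.
Definition covby (f : nat -> nat) (y : R) : Prop :=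
  exists l code, ivl f l = S code /\ LO code < y < HI code.

Lemma Good_mono f eps eps' K K' y : eps' <= eps -> (K <= K')%nat -> Good f eps K y -> Good f eps' K' y.
Proof.
  intros He HK (l & code & Hl & E & H1 & H2). exists l, code. repeat split; auto; try lia; lra.
Qed.

Lemma lebesgue f a b : a <= b -> (forall y, a <= y <= b -> covby f y) ->
  exists eps K, 0 < eps /\ forall y, a <= y <= b -> Good f eps K y.
Proof.
  intros Hab Hcov.
  set (SS := fun t => a <= t <= b /\ exists eps K, 0 < eps /\ forall y, a <= y <= t -> Good f eps K y).
  assert (Sa : SS a).
  { split. lra. destruct (Hcov a ltac:(lra)) as (l0 & c0 & E0 & H1 & H2).
    exists (Rmin (a - LO c0) (HI c0 - a) / 2), (S l0). split.
    - apply Rmin_case; lra.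
    - intros y Hy. assert (y = a) by lra. subst y. exists l0, c0. repeat split; auto.
      + pose proof (Rmin_l (a - LO c0) (HI c0 - a)). pose proof (Rmin_r (a - LO c0) (HI c0 - a)).
        assert (0 < Rmin (a - LO c0) (HI c0 - a)) by (apply Rmin_case; lra). lra.
      + pose proof (Rmin_l (a - LO c0) (HI c0 - a)). pose proof (Rmin_r (a - LO c0) (HI c0 - a)).
        assert (0 < Rmin (a - LO c0) (HI c0 - a)) by (apply Rmin_case; lra). lra. }
  assert (Hb : bound SS). { exists b. intros t [Ht _]. lra. }
  destruct (completeness SS Hb (ex_intro _ a Sa)) as [s [Hub Hlub]].
  assert (Has : a <= s) by (apply Hub; exact Sa).
  assert (Hsb : s <= b). { apply Hlub. intros t [Ht _]. lra. }
  destruct (Hcov s ltac:(lra)) as (l1 & c1 & E1 & H1 & H2).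
  set (r := Rmin (s - LO c1) (HI c1 - s)).
  assert (Hr : 0 < r) by (unfold r; apply Rmin_case; lra).
  assert (Hr1 : r <= s - LO c1) by apply Rmin_l.
  assert (Hr2 : r <= HI c1 - s) by apply Rmin_r.
  assert (Ht : exists t, SS t /\ s - r / 4 < t).
  { apply NNPP. intros Hn. assert (s <= s - r / 4); [|lra].
    apply Hlub. intros t St. apply Rnot_lt_le. intros Hlt. apply Hn. exists t; auto. }
  destruct Ht as [t [[Ht1 (et & Kt & Het & HGt)] Hts]].
  set (t' := Rmin b (s + r / 4)).
  assert (St' : SS t').
  { split. unfold t'; split. apply Rmin_case; lra. apply Rmin_l.
    exists (Rmin et (r / 4)), (Nat.max Kt (S l1)). split. apply Rmin_case; lra.
    intros y Hy. destruct (Rle_dec y t) as [Hyt|Hyt].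
    - apply Good_mono with et Kt. apply Rmin_l. lia. apply HGt. lra.
    - assert (y <= s + r / 4) by (pose proof (Rmin_r b (s + r / 4)); fold t' in H; lra).
      pose proof (Rmin_r et (r / 4)). assert (0 < Rmin et (r / 4)) by (apply Rmin_case; lra).
      exists l1, c1. repeat split; auto; try lia; lra. }
  assert (Ht's : t' <= s) by (apply Hub; exact St').
  assert (Hsb' : s = b).
  { destruct (Req_dec s b); auto. exfalso. unfold t' in Ht's.
    revert Ht's. apply Rmin_case; intros; lra. }
  assert (t' = b). { unfold t'. apply Rmin_left. lra. }
  destruct St' as [_ (e & K & He & HG)]. exists e, K. split; auto. intros y Hy. apply HG. lra.
Qed.

Lemma INR_lt_pow2 n : INR n < 2 ^ n.
Proof.
  induction n. simpl. lra. rewrite S_INR. simpl. pose proof (pow2_pos n).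
  assert (1 <= 2 ^ n) by (apply pow_R1_Rle; lra). lra.
Qed.

Lemma small_pow2 eps n0 : 0 < eps -> exists k, (n0 <= k)%nat /\ / 2 ^ k < eps.
Proof.
  intros He. destruct (archimed (/ eps)) as [H1 _].
  assert (Hie : 0 < / eps) by (apply Rinv_0_lt_compat; lra).
  set (k0 := Z.to_nat (up (/ eps))).
  assert (Hk0 : / eps <= INR k0).
  { unfold k0. rewrite INR_IZR_INZ. rewrite Z2Nat.id. lra.
    apply le_IZR. lra. }
  exists (Nat.max n0 k0). split. lia.
  assert (H : / eps < 2 ^ (Nat.max n0 k0)).
  { apply Rle_lt_trans with (INR k0); auto. apply Rle_lt_trans with (INR (Nat.max n0 k0)).
    - apply le_INR. lia.
    - apply INR_lt_pow2. }
  rewrite <- (Rinv_inv eps). apply Rinv_lt_contravar; auto.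
  apply Rmult_lt_0_compat; auto. apply pow2_pos.
Qed.

Local Open Scope R_scope.

Lemma div_nonneg a b : 0 <= a -> 0 < b -> 0 <= a / b.
Proof. intros. unfold Rdiv. apply Rmult_le_pos; auto. left. apply Rinv_0_lt_compat; auto. Qed.

Lemma grid_end k N j : (N <= k)%nat ->
  INR (2 * j * 2 ^ (k - N)) / 2 ^ k = 2 * (INR j / 2 ^ N).
Proof.
  intros H. rewrite !mult_INR, INR_pow2, (pow2_split k N H). simpl INR.
  pose proof (pow2_pos N). pose proof (pow2_pos (k - N)). field. lra.
Qed.

Lemma TP_sound f k N j : TP f k N j -> forall y, X f N - INR j / 2 ^ N <= y <= X f N + INR j / 2 ^ N ->
  exists l code, (l < k)%nat /\ ivl f l = S code /\ LO code < y < HI code.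
Proof.
  intros [HNk Hg] y Hy.
  set (L := X f N - INR j / 2 ^ N) in *.
  set (M := (2 * j * 2 ^ (k - N))%nat) in *.
  assert (Hk : 0 < / 2 ^ k) by (apply Rinv_0_lt_compat; apply pow2_pos).
  assert (Cl : forall g, (g <= M)%nat -> forall y, L <= y <= L + INR g / 2 ^ k ->
     exists l code, (l < k)%nat /\ ivl f l = S code /\ LO code < y < HI code).
  { induction g; intros Hg' y' Hy'.
    - destruct (Hg 0%nat ltac:(lia)) as [l [Hl Hc]]. apply cell_real in Hc; auto.
      destruct Hc as (code & E & H1 & H2). exists l, code. repeat split; auto.
      + simpl INR in *. unfold L in *. unfold Rdiv in *. lra.
      + simpl INR in *. unfold L in *. unfold Rdiv in *. lra.
    - destruct (Rle_dec y' (L + INR g / 2 ^ k)) as [Hle|Hgt].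
      + apply IHg. lia. lra.
      + destruct (Hg (S g) ltac:(lia)) as [l [Hl Hc]]. apply cell_real in Hc; auto.
        destruct Hc as (code & E & H1 & H2). exists l, code.
        rewrite S_INR in *. unfold Rdiv in *. rewrite Rmult_plus_distr_r in *. fold L in H1, H2.
        repeat split; auto; lra. }
  apply (Cl M (le_n _)). unfold M. rewrite grid_end by auto. unfold L in *. lra.
Qed.

Lemma TP_complete f N j : (forall y, X f N - INR j / 2 ^ N <= y <= X f N + INR j / 2 ^ N -> covby f y) ->
  exists k, TP f k N j.
Proof.
  intros Hc.
  assert (Hj : 0 <= INR j / 2 ^ N) by (apply div_nonneg; [apply pos_INR|apply pow2_pos]).
  destruct (lebesgue f (X f N - INR j / 2 ^ N) (X f N + INR j / 2 ^ N) ltac:(lra) Hc) as (eps & K & He & HG).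
  destruct (small_pow2 eps (Nat.max K N) He) as (k & Hk & Hsmall).
  exists k. split. lia. intros g Hg.
  set (y := X f N - INR j / 2 ^ N + INR g / 2 ^ k).
  assert (Hy : X f N - INR j / 2 ^ N <= y <= X f N + INR j / 2 ^ N).
  { unfold y. split.
    - assert (0 <= INR g / 2 ^ k) by (apply div_nonneg; [apply pos_INR|apply pow2_pos]). lra.
    - assert (INR g / 2 ^ k <= 2 * (INR j / 2 ^ N)).
      { rewrite <- (grid_end k N j) by lia. unfold Rdiv. apply Rmult_le_compat_r.
        left; apply Rinv_0_lt_compat, pow2_pos. apply le_INR. lia. }
      lra. }
  destruct (HG y Hy) as (l & code & Hl & E & H1 & H2).
  exists l. split. lia. apply cell_real. lia. exists code. split; auto. fold y. split; lra.
Qed.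

Local Open Scope R_scope.

Lemma abs_le a b : Rabs a <= b -> - b <= a <= b.
Proof. unfold Rabs. destruct (Rcase_abs a); intros; lra. Qed.

Definition Free (f : nat -> nat) (A : R -> Prop) (N j : nat) : Prop :=
  exists y, X f N - INR j / 2 ^ N <= y <= X f N + INR j / 2 ^ N /\ A y.

Lemma finite_bound (P : nat -> nat -> Prop) : (forall j k k', (k <= k')%nat -> P j k -> P j k') ->
  forall J, (forall j, (j < J)%nat -> exists k, P j k) -> exists K, forall j, (j < J)%nat -> P j K.
Proof.
  intros Hm J. induction J; intros H.
  - exists 0%nat. intros; lia.
  - destruct IHJ as [K HK]. intros j Hj. apply H. lia.
    destruct (H J ltac:(lia)) as [k Hk]. exists (Nat.max K k). intros j Hj.
    destruct (Nat.eq_dec j J). subst. apply Hm with k; auto; lia. apply Hm with K. lia. apply HK. lia.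
Qed.

Lemma Eb_iff f k N j : negb (oeval f [k; N; j] F_E =? 0)%nat = true <-> EP f k N j.
Proof.
  rewrite <- F_E_ok. destruct (oeval f [k; N; j] F_E); simpl; split; intros; congruence.
Qed.
Lemma Eb_false f k N j : negb (oeval f [k; N; j] F_E =? 0)%nat = false <-> ~ EP f k N j.
Proof.
  rewrite <- F_E_ok. destruct (oeval f [k; N; j] F_E); simpl; split; intros H.
  - intros H0. apply H0. reflexivity.
  - reflexivity.
  - congruence.
  - exfalso. apply H. congruence.
Qed.

Lemma jconv f (A : R -> Prop) :
  (forall y, ~ A y <-> covby f y) -> (exists z, A z) ->
  forall N, exists J, (forall j, (j < J)%nat -> ~ Free f A N j) /\ Free f A N J /\
    exists K, forall k, (K <= k)%nat -> jstar f k N = J.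
Proof.
  intros HA [z Hz] N.
  assert (Hfree0 : exists j0, Free f A N j0).
  { set (t := Rabs (z - X f N) * 2 ^ N).
    destruct (archimed t) as [H1 _].
    assert (0 <= t) by (unfold t; apply Rmult_le_pos; [apply Rabs_pos|left; apply pow2_pos]).
    exists (Z.to_nat (up t)). exists z. split; auto.
    assert (Ht : t <= INR (Z.to_nat (up t))).
    { rewrite INR_IZR_INZ, Z2Nat.id. lra. apply le_IZR. lra. }
    assert (Hab : Rabs (z - X f N) <= INR (Z.to_nat (up t)) / 2 ^ N).
    { assert (Rabs (z - X f N) * 2 ^ N = t) by reflexivity. pose proof (pow2_pos N). apply Rmult_le_reg_r with (2 ^ N); auto.
      unfold Rdiv. rewrite Rmult_assoc, Rinv_l by lra. lra. }
    apply abs_le in Hab. lra. }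
  destruct Hfree0 as [j0 Hj0].
  destruct (ex_least (fun j => Free f A N j)) with (k := j0) as [J [HJ Hmin]].
  { intros; apply classic. }
  { exact Hj0. }
  exists J. split; auto. split; auto.
  assert (Hnf : forall j, (j < J)%nat -> exists k, (exists k', (k' <= k)%nat /\ TP f k' N j)).
  { intros j Hj. destruct (TP_complete f N j) as [k Hk].
    - intros y Hy. apply HA. intros Ay. apply (Hmin j Hj). exists y. auto.
    - exists k, k. auto. }
  destruct (finite_bound (fun j k => exists k', (k' <= k)%nat /\ TP f k' N j)) with (J := J) as [K HK].
  { intros j k k' Hkk [k1 [H1 H2]]. exists k1. split; auto. lia. }
  { exact Hnf. }
  exists (Nat.max K J). intros k Hk. unfold jstar. apply firstb_eq.
  - lia.
  - apply Eb_iff. intros k' Hk' HT. destruct HJ as [y [Hy Ay]].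
    destruct (TP_sound f k' N J HT y Hy) as (l & code & _ & E & H1 & H2).
    apply (proj2 (HA y)) ; auto. exists l, code. auto.
  - intros j Hj. apply Eb_false. intros HE. destruct (HK j Hj) as [k' [Hk'K HT]].
    apply (HE k'). lia. exact HT.
Qed.

Local Open Scope R_scope.

Lemma dist_ex (x : R) (A : R -> Prop) : (exists z, A z) ->
  exists d, 0 <= d /\ (forall z, A z -> d <= Rabs (x - z)) /\
    (forall c, (forall z, A z -> c <= Rabs (x - z)) -> c <= d).
Proof.
  intros [z0 Hz0].
  set (E := fun t => exists z, A z /\ t = - Rabs (x - z)).
  assert (Hb : bound E). { exists 0. intros t [z [_ ->]]. pose proof (Rabs_pos (x - z)). lra. }
  destruct (completeness E Hb (ex_intro _ (- Rabs (x - z0)) (ex_intro _ z0 (conj Hz0 eq_refl)))) as [m [Hub Hlub]].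
  exists (- m). split; [|split].
  - assert (m <= 0); [|lra]. apply Hlub. intros t [z [_ ->]]. pose proof (Rabs_pos (x - z)). lra.
  - intros z Hz. assert (- Rabs (x - z) <= m) by (apply Hub; exists z; auto). lra.
  - intros c Hc. assert (m <= - c); [|lra]. apply Hlub. intros t [z [Hz ->]]. specialize (Hc z Hz). lra.
Qed.

Lemma attained (x : R) (A : R -> Prop) f d :
  (forall y, ~ A y <-> covby f y) ->
  (forall z, A z -> d <= Rabs (x - z)) -> (forall c, (forall z, A z -> c <= Rabs (x - z)) -> c <= d) ->
  A (x - d) \/ A (x + d).
Proof.
  intros HA Hd1 Hd2. apply NNPP. intros Hn.
  assert (N1 : ~ A (x - d)) by tauto. assert (N2 : ~ A (x + d)) by tauto.
  apply HA in N1. apply HA in N2.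
  destruct N1 as (l1 & c1 & E1 & H11 & H12). destruct N2 as (l2 & c2 & E2 & H21 & H22).
  set (e := Rmin (Rmin (x - d - LO c1) (HI c1 - (x - d))) (Rmin (x + d - LO c2) (HI c2 - (x + d)))).
  assert (He : 0 < e) by (unfold e; repeat apply Rmin_case; lra).
  assert (He1 : e <= x - d - LO c1) by (unfold e; eapply Rle_trans; [apply Rmin_l|apply Rmin_l]).
  assert (He2 : e <= HI c1 - (x - d)) by (unfold e; eapply Rle_trans; [apply Rmin_l|apply Rmin_r]).
  assert (He3 : e <= x + d - LO c2) by (unfold e; eapply Rle_trans; [apply Rmin_r|apply Rmin_l]).
  assert (He4 : e <= HI c2 - (x + d)) by (unfold e; eapply Rle_trans; [apply Rmin_r|apply Rmin_r]).
  assert (d + e <= d); [|lra].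
  apply Hd2. intros z Hz. apply Rnot_lt_le. intros Hlt.
  pose proof (Hd1 z Hz) as Hdz.
  apply (proj2 (HA z)); auto.
  destruct (Rle_dec z x).
  - exists l1, c1. split; auto. rewrite Rabs_right in Hlt, Hdz by lra. split; lra.
  - exists l2, c2. split; auto. rewrite Rabs_left in Hlt, Hdz by lra. split; lra.
Qed.

Lemma Jbound f (A : R -> Prop) x d N J :
  Rabs (X f N - x) <= / 2 ^ N ->
  (forall z, A z -> d <= Rabs (x - z)) -> (forall c, (forall z, A z -> c <= Rabs (x - z)) -> c <= d) ->
  0 <= d ->
  (forall j, (j < J)%nat -> ~ Free f A N j) -> Free f A N J ->
  Rabs (d - INR J / 2 ^ N) <= 2 / 2 ^ N.
Proof.
  intros Hx Hd1 Hd2 Hd0 Hmin [y [Hy Ay]].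
  assert (P : 0 < / 2 ^ N) by (apply Rinv_0_lt_compat, pow2_pos).
  apply abs_le in Hx.
  assert (Up : d <= / 2 ^ N + INR J / 2 ^ N).
  { specialize (Hd1 y Ay). split_Rabs; lra. }
  assert (Lo : INR J / 2 ^ N - 2 / 2 ^ N <= d).
  { destruct J as [|j'].
    - simpl INR. unfold Rdiv. lra.
    - apply Hd2. intros z Hz.
      assert (Hnz : ~ (X f N - INR j' / 2 ^ N <= z <= X f N + INR j' / 2 ^ N)).
      { intros Hin. apply (Hmin j' ltac:(lia)). exists z. auto. }
      rewrite S_INR. unfold Rdiv in *. rewrite Rmult_plus_distr_r, Rmult_1_l.
      destruct (Rle_dec z x); split_Rabs; try lra;
      apply Rnot_lt_le; intros Hc; apply Hnz; split; lra. }
  apply Rabs_le. unfold Rdiv in *. lra.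
Qed.

Local Open Scope R_scope.

Definition val_c (f : nat -> nat) (J s m : nat) : R := tv (cPs f J s m) (cMs f J s m) (cDs f m).

Lemma pow2_1 k : (1 <= 2 ^ k)%nat.
Proof. pose proof (Nat.pow_nonzero 2 k). lia. Qed.

Lemma val_c_ok f J s m : val_c f J s m =
  if (s =? 0)%nat then X f (m + 2) - INR J / 2 ^ (m + 2) else X f (m + 2) + INR J / 2 ^ (m + 2).
Proof.
  unfold val_c, cPs, cMs, cDs. destruct (s =? 0)%nat.
  - replace (xP f (m + 2) * 2 ^ (m + 2))%nat with (xP f (m + 2) * 2 ^ (m + 2) + 0 * xD f (m + 2))%nat by lia.
    rewrite tv_shift by (auto using xD_pos, pow2_1). rewrite INR_pow2. simpl INR. unfold X, Rdiv. lra.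
  - replace (xM f (m + 2) * 2 ^ (m + 2))%nat with (xM f (m + 2) * 2 ^ (m + 2) + 0 * xD f (m + 2))%nat by lia.
    rewrite tv_shift by (auto using xD_pos, pow2_1). rewrite INR_pow2. simpl INR. unfold X, Rdiv. lra.
Qed.

Lemma cDs_pos f m : (1 <= cDs f m)%nat.
Proof. unfold cDs. pose proof (xD_pos f (m + 2)). pose proof (pow2_1 (m + 2)). nia. Qed.

Lemma DP_real f jf s m : DP f jf s m <->
  exists l code, (l < m + 1)%nat /\ ivl f l = S code /\
    LO code < val_c f (jf (m + 2)%nat) s m - / 2 ^ m /\ val_c f (jf (m + 2)%nat) s m + / 2 ^ m < HI code.
Proof.
  unfold DP. cbv zeta.
  set (J := jf (m + 2)%nat).
  assert (HD := cDs_pos f m).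
  assert (H1 : tv (cPs f J s m * 2 ^ m) (cMs f J s m * 2 ^ m + cDs f m) (cDs f m * 2 ^ m) = val_c f J s m - / 2 ^ m).
  { replace (cPs f J s m * 2 ^ m)%nat with (cPs f J s m * 2 ^ m + 0 * cDs f m)%nat by lia.
    replace (cMs f J s m * 2 ^ m + cDs f m)%nat with (cMs f J s m * 2 ^ m + 1 * cDs f m)%nat by lia.
    rewrite tv_shift by (auto using pow2_1). rewrite INR_pow2. unfold val_c. simpl INR. unfold Rdiv. lra. }
  assert (H2 : tv (cPs f J s m * 2 ^ m + cDs f m) (cMs f J s m * 2 ^ m) (cDs f m * 2 ^ m) = val_c f J s m + / 2 ^ m).
  { replace (cPs f J s m * 2 ^ m + cDs f m)%nat with (cPs f J s m * 2 ^ m + 1 * cDs f m)%nat by lia.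
    replace (cMs f J s m * 2 ^ m)%nat with (cMs f J s m * 2 ^ m + 0 * cDs f m)%nat by lia.
    rewrite tv_shift by (auto using pow2_1). rewrite INR_pow2. unfold val_c. simpl INR. unfold Rdiv. lra. }
  assert (HP : (1 <= cDs f m * 2 ^ m)%nat) by (pose proof (pow2_1 m); nia).
  unfold ltqn. split.
  - intros (l & Hl & Hv & L1 & L2). exists l, (ivl f l - 1)%nat. split; auto. split. lia.
    rewrite ltq_ok in L1, L2 by (auto using qD_pos). rewrite H1 in L1. rewrite H2 in L2.
    unfold LO, HI. rewrite !qv_ok. split; auto.
  - intros (l & code & Hl & E & L1 & L2). exists l. split; auto. rewrite E. split. lia.
    replace (S code - 1)%nat with code by lia.
    rewrite !ltq_ok by (auto using qD_pos). rewrite H1, H2.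
    unfold LO, HI in *. rewrite !qv_ok in *. split; auto.
Qed.

Lemma pow2_S2 m : 2 ^ (m + 2) = 4 * 2 ^ m.
Proof. rewrite pow_add. simpl. lra. Qed.

Lemma DP_sound f (A : R -> Prop) jf s m y : (forall y, ~ A y <-> covby f y) ->
  Rabs (val_c f (jf (m + 2)%nat) s m - y) <= 3 / 2 ^ (m + 2) -> DP f jf s m -> ~ A y.
Proof.
  intros HA Hv HD. apply DP_real in HD. destruct HD as (l & code & _ & E & L1 & L2).
  apply HA. exists l, code. split; auto. rewrite pow2_S2 in Hv. apply abs_le in Hv.
  pose proof (pow2_pos m). assert (0 < / 2 ^ m) by (apply Rinv_0_lt_compat; lra).
  assert (3 / (4 * 2 ^ m) = 3 / 4 * / 2 ^ m) by (field; lra). split; lra.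
Qed.

Lemma DP_complete f (A : R -> Prop) jf s y : (forall y, ~ A y <-> covby f y) ->
  (forall m, Rabs (val_c f (jf (m + 2)%nat) s m - y) <= 3 / 2 ^ (m + 2)) -> ~ A y -> exists m, DP f jf s m.
Proof.
  intros HA Hv Hn. apply HA in Hn. destruct Hn as (l & code & E & L1 & L2).
  set (dl := Rmin (y - LO code) (HI code - y)).
  assert (Hdl : 0 < dl) by (unfold dl; apply Rmin_case; lra).
  assert (Hd1 : dl <= y - LO code) by apply Rmin_l. assert (Hd2 : dl <= HI code - y) by apply Rmin_r.
  destruct (small_pow2 (dl / 2) l ltac:(lra)) as [m [Hm Hs]].
  exists m. apply DP_real. exists l, code. split. lia. split; auto.
  specialize (Hv m). rewrite pow2_S2 in Hv. apply abs_le in Hv.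
  pose proof (pow2_pos m). assert (0 < / 2 ^ m) by (apply Rinv_0_lt_compat; lra).
  assert (3 / (4 * 2 ^ m) = 3 / 4 * / 2 ^ m) by (field; lra). split; lra.
Qed.

Local Open Scope R_scope.

Definition LLPOdom (p0 p1 : Baire) : Prop :=
  forall (j j' : bool) (m m' : nat), (if j then p1 else p0) m <> 0%nat -> (if j' then p1 else p0) m' <> 0%nat ->
    j = j' /\ m = m'.

Lemma DP_ext f jf1 jf2 s m : jf1 (m + 2)%nat = jf2 (m + 2)%nat -> (DP f jf1 s m <-> DP f jf2 s m).
Proof. intros H. unfold DP. cbv zeta. rewrite H. tauto. Qed.

Definition FP (f : nat -> nat) (jf : nat -> nat) (s m : nat) : Prop :=
  DP f jf s m /\ forall m', (m' < m)%nat -> ~ DP f jf s m'.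

Definition qideal (f : nat -> nat) (jf : nat -> nat) (i : nat) : nat :=
  let h := Nat.div2 i in let s := sideof h in let m := Nat.div2 h in
  if Nat.even i then (if excluded_middle_informative (FP f jf s m) then 1%nat else 0%nat)
  else enc_out (cPs f (jf (m + 2)%nat) s m) (cMs f (jf (m + 2)%nat) s m) (cDs f m).

Lemma div2_le i : (Nat.div2 i <= i)%nat.
Proof. pose proof (Nat.div2_odd i). destruct (Nat.odd i); simpl in *; lia. Qed.

Lemma stage_conv f jf : (forall N, exists K, forall k, (K <= k)%nat -> jstar f k N = jf N) ->
  forall i, exists K, forall k, (K <= k)%nat -> oeval f [npair k i] F_main = qideal f jf i.
Proof.
  intros Hj i.
  destruct (finite_bound (fun N K => forall k, (K <= k)%nat -> jstar f k N = jf N)) with (J := (i + 3)%nat) as [K HK].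
  { intros N K K' HKK H k Hk. apply H. lia. }
  { intros N _. apply Hj. }
  exists K. intros k Hk. rewrite F_main_ok. rewrite unpair_npair. cbv zeta. simpl fst; simpl snd.
  unfold qideal. cbv zeta.
  set (h := Nat.div2 i). set (m := Nat.div2 h). set (s := sideof h).
  assert (Hm : (m <= i)%nat) by (unfold m, h; pose proof (div2_le i); pose proof (div2_le (Nat.div2 i)); lia).
  assert (Hjm : forall m', (m' <= m)%nat -> jstar f k (m' + 2)%nat = jf (m' + 2)%nat).
  { intros m' Hm'. apply HK. lia. auto. }
  destruct (Nat.even i).
  - destruct (excluded_middle_informative (FP f jf s m)) as [HF|HF].
    + destruct (F_fire_01 f k s m) as [E|E]; auto.
      exfalso. apply (proj2 (F_fire_ok f k s m)). 2: exact E.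
      destruct HF as [H1 H2]. split.
      * apply (DP_ext f _ jf). apply Hjm; lia. exact H1.
      * intros m' Hm' HD. apply (H2 m' Hm'). apply (DP_ext f (jstar f k) jf); auto. apply Hjm; lia.
    + destruct (F_fire_01 f k s m) as [E|E]; auto.
      exfalso. apply HF. assert (E' : oeval f [k; s; m] F_fire <> 0%nat) by lia.
      apply F_fire_ok in E'. destruct E' as [H1 H2]. split.
      * apply (DP_ext f jf (jstar f k)). symmetry. apply Hjm; lia. exact H1.
      * intros m' Hm' HD. apply (H2 m' Hm'). apply (DP_ext f jf (jstar f k)); auto. symmetry. apply Hjm; lia.
  - rewrite (Hjm m (le_n _)). reflexivity.
Qed.

Lemma idx_4n n : Nat.even (4 * n) = true /\ Nat.div2 (4 * n) = (2 * n)%nat /\ sideof (2 * n) = 0%nat /\ Nat.div2 (2 * n) = n.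
Proof.
  replace (4 * n)%nat with (2 * (2 * n))%nat by lia. rewrite even_2x, div2_2x. unfold sideof.
  rewrite even_2x, div2_2x. auto.
Qed.
Lemma idx_4n2 n : Nat.even (4 * n + 2) = true /\ Nat.div2 (4 * n + 2) = (2 * n + 1)%nat /\ sideof (2 * n + 1) = 1%nat /\ Nat.div2 (2 * n + 1) = n.
Proof.
  replace (4 * n + 2)%nat with (2 * (2 * n + 1))%nat by lia. rewrite even_2x, div2_2x. unfold sideof.
  rewrite even_2x1, div2_2x1. auto.
Qed.
Lemma idx_4n1 n : Nat.even (4 * n + 1) = false /\ Nat.div2 (4 * n + 1) = (2 * n)%nat.
Proof.
  replace (4 * n + 1)%nat with (2 * (2 * n) + 1)%nat by lia. rewrite even_2x1, div2_2x1. auto.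
Qed.
Lemma idx_4n3 n : Nat.even (4 * n + 3) = false /\ Nat.div2 (4 * n + 3) = (2 * n + 1)%nat.
Proof.
  replace (4 * n + 3)%nat with (2 * (2 * n + 1) + 1)%nat by lia. rewrite even_2x1, div2_2x1. auto.
Qed.

Lemma q_fire f jf n (b : bool) : qideal f jf (if b then 4 * n + 2 else 4 * n)%nat =
  if excluded_middle_informative (FP f jf (if b then 1 else 0)%nat n) then 1%nat else 0%nat.
Proof.
  unfold qideal. destruct b.
  - destruct (idx_4n2 n) as (E1 & E2 & E3 & E4). rewrite E1, E2, E3, E4. reflexivity.
  - destruct (idx_4n n) as (E1 & E2 & E3 & E4). rewrite E1, E2, E3, E4. reflexivity.
Qed.

Lemma q_out f jf n (b : bool) : qideal f jf (if b then 4 * n + 3 else 4 * n + 1)%nat =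
  let s := (if b then 1 else 0)%nat in
  enc_out (cPs f (jf (n + 2)%nat) s n) (cMs f (jf (n + 2)%nat) s n) (cDs f n).
Proof.
  unfold qideal. destruct b.
  - destruct (idx_4n3 n) as (E1 & E2). rewrite E1, E2. destruct (idx_4n2 n) as (_ & _ & E3 & E4).
    rewrite E3, E4. reflexivity.
  - destruct (idx_4n1 n) as (E1 & E2). rewrite E1, E2. destruct (idx_4n n) as (_ & _ & E3 & E4).
    rewrite E3, E4. reflexivity.
Qed.

Definition flim (f : nat -> nat) : nat -> Baire := fun k i => oeval f [npair k i] F_main.

Lemma main_sem (p : Baire) (x : R) (A : R -> Prop) :
  (forall n, Rabs (X p n - x) <= / 2 ^ n) -> (forall y, ~ A y <-> covby p y) -> (exists z, A z) ->
  exists q : Baire, lim (flim p) q /\ (forall y, lim (flim p) y -> forall i, y i = q i) /\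
    LLPOdom (fun n => q (4 * n)%nat) (fun n => q (4 * n + 2)%nat) /\
    (forall b : bool, (forall n, q (if b then 4 * n + 2 else 4 * n)%nat = 0%nat) ->
       exists yv, rep_cauchy (fun n => q (if b then 4 * n + 3 else 4 * n + 1)%nat) yv /\ Proj (x, A) yv).
Proof.
  intros Hx HA Hne.
  pose (Jsig := fun N => constructive_indefinite_description _ (jconv p A HA Hne N)).
  set (Jf := fun N => proj1_sig (Jsig N)).
  assert (HJ : forall N, (forall j, (j < Jf N)%nat -> ~ Free p A N j) /\ Free p A N (Jf N) /\
                 exists K, forall k, (K <= k)%nat -> jstar p k N = Jf N).
  { intros N. exact (proj2_sig (Jsig N)). }
  destruct (dist_ex x A Hne) as (d & Hd0 & Hd1 & Hd2).
  set (ys := fun s : nat => if (s =? 0)%nat then x - d else x + d).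
  assert (Hval : forall s m, Rabs (val_c p (Jf (m + 2)%nat) s m - ys s) <= 3 / 2 ^ (m + 2)).
  { intros s m. destruct (HJ (m + 2)%nat) as (H1 & H2 & _).
    pose proof (Jbound p A x d (m + 2) (Jf (m + 2)%nat) (Hx _) Hd1 Hd2 Hd0 H1 H2) as HB.
    pose proof (Hx (m + 2)%nat) as Hxm.
    rewrite val_c_ok. unfold ys. apply Rabs_le. apply abs_le in HB. apply abs_le in Hxm.
    destruct (s =? 0)%nat; unfold Rdiv in *; lra. }
  assert (Hsound : forall s m, DP p Jf s m -> ~ A (ys s)).
  { intros s m. apply DP_sound; auto. }
  assert (Hatt : A (ys 0%nat) \/ A (ys 1%nat)).
  { unfold ys. simpl. apply (attained x A p d HA Hd1 Hd2). }
  set (q := qideal p Jf).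
  assert (Hlim : lim (flim p) q).
  { intros i. destruct (stage_conv p Jf (fun N => proj2 (proj2 (HJ N))) i) as [K HK].
    exists K. intros k Hk. apply HK. auto. }
  exists q. split; [exact Hlim|]. split; [|split].
  - intros y Hy i. destruct (Hy i) as [N1 H1]. destruct (Hlim i) as [N2 H2].
    rewrite <- (H1 (Nat.max N1 N2)) by lia. apply H2. lia.
  - intros j j' m m' H1 H2.
    assert (F1 : FP p Jf (if j then 1 else 0)%nat m).
    { pose proof (q_fire p Jf m j) as E. fold q in E. destruct j; cbv beta iota in H1, E; rewrite E in H1;
      destruct (excluded_middle_informative _); auto; congruence. }
    assert (F2 : FP p Jf (if j' then 1 else 0)%nat m').
    { pose proof (q_fire p Jf m' j') as E. fold q in E. destruct j'; cbv beta iota in H2, E; rewrite E in H2;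
      destruct (excluded_middle_informative _); auto; congruence. }
    destruct F1 as [D1 M1]. destruct F2 as [D2 M2].
    assert (Hjj : j = j').
    { destruct j, j'; auto; exfalso; apply Hsound in D1; apply Hsound in D2; destruct Hatt; auto. }
    subst j'. split; auto.
    destruct (lt_eq_lt_dec m m') as [[Hlt|Heq]|Hgt]; auto.
    + exfalso. exact (M2 m Hlt D1).
    + exfalso. exact (M1 m' Hgt D2).
  - intros b Hb. set (sb := (if b then 1 else 0)%nat).
    assert (HAy : A (ys sb)).
    { apply NNPP. intros HnA.
      destruct (DP_complete p A Jf sb (ys sb) HA (fun m => Hval sb m) HnA) as [m Hm].
      destruct (ex_least (fun m => DP p Jf sb m)) with (k := m) as [m0 [Hm0 Hmin]].
      { intros; apply classic. } { exact Hm. }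
      specialize (Hb m0). pose proof (q_fire p Jf m0 b) as E. fold q in E. rewrite E in Hb.
      destruct (excluded_middle_informative _) as [_|HF]. discriminate.
      apply HF. split; auto. }
    exists (ys sb). split.
    + intros n. pose proof (q_out p Jf n b) as E. fold q in E. cbv zeta in E. rewrite E.
      rewrite enc_out_ok by apply cDs_pos. fold sb. fold (val_c p (Jf (n + 2)%nat) sb n).
      eapply Rle_trans. apply Hval. rewrite pow2_S2. pose proof (pow2_pos n).
      assert (0 < / 2 ^ n) by (apply Rinv_0_lt_compat; lra).
      replace (3 / (4 * 2 ^ n)) with (3 / 4 * / 2 ^ n) by (field; lra). lra.
    + unfold Proj. split; auto. split; auto. intros z Hz. specialize (Hd1 z Hz).
      unfold ys. destruct (sb =? 0)%nat; split_Rabs; lra.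
Qed.

Local Open Scope R_scope.

Lemma rep_baire_is_rep : is_rep rep_baire.
Proof.
  split.
  - intros p x y H1 H2. apply functional_extensionality. intros n. rewrite <- H1, <- H2. reflexivity.
  - intros x. exists x. intros n. reflexivity.
Qed.

Lemma bpair_odd (p q : Baire) n : bpair p q (2 * n + 1)%nat = q n.
Proof. unfold bpair. rewrite even_2x1, div2_2x1. reflexivity. Qed.
Lemma bpair_even (p q : Baire) n : bpair p q (2 * n)%nat = p n.
Proof. unfold bpair. rewrite even_2x, div2_2x. reflexivity. Qed.

Definition e_id : oexpr := OOrc (OVar 0).
Definition e_bfst : oexpr := OOrc (OMul (OConst 2) (OVar 0)).
Definition e_bsnd : oexpr := OOrc (OAdd (OMul (OConst 2) (OVar 0)) (OConst 1)).
Definition e_sel : oexpr :=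
  OIf (OOrc (OConst 1)) (OOrc (OAdd (OMul (OConst 8) (OVar 0)) (OConst 6)))
                        (OOrc (OAdd (OMul (OConst 8) (OVar 0)) (OConst 2))).

Definition f0 : mvf Baire Baire := fun u v => lim (fun k i => u (npair k i)) v.
Definition g0 : mvf Baire Baire := fun v t =>
  exists b : bool, LLPO (bfst (bfst v), bsnd (bfst v)) b /\
    forall n, t n = (if b then bsnd (bsnd v) else bfst (bsnd v)) n.

Lemma W1 : WRed rep_baire rep_baire rep_baire_seq rep_baire f0 lim.
Proof.
  destruct (assoc_expr e_id eq_refl) as [aK [cK HK]].
  destruct (assoc_expr e_bsnd eq_refl) as [aH [cH HH]].
  exists aK, aH. split; auto. split; auto.
  intros G HG p u Hpu Hdom.
  set (k := fun n => oeval p [n] e_id).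
  set (s := fun a i => u (npair a i)).
  assert (Hk : rep_baire_seq k s). { intros a i. unfold k, s, e_id. cbn [oeval nth]. apply Hpu. }
  destruct (HG k s Hk Hdom) as [Hdk (y & Hy & Hly)].
  exists k, (fun n => oeval (bpair p (pval G k)) [n] e_bsnd). split; auto. split; auto. split; auto.
  exists y. split.
  - intros n. unfold e_bsnd. cbn [oeval nth]. rewrite bpair_odd. apply Hy.
  - exact Hly.
Qed.

Lemma W2 : WRed rep_baire rep_baire (rep_prod rep_baire rep_baire) rep_bool g0 LLPO.
Proof.
  destruct (assoc_expr e_bfst eq_refl) as [aK [cK HK]].
  destruct (assoc_expr e_sel eq_refl) as [aH [cH HH]].
  exists aK, aH. split; auto. split; auto.
  intros G HG p v Hpv [t [b [Hll Ht]]].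
  set (k := fun n => oeval p [n] e_bfst).
  assert (Hk : rep_prod rep_baire rep_baire k (bfst (bfst v), bsnd (bfst v))).
  { split; intros n; unfold k, e_bfst, bfst, bsnd; cbn [oeval nth fst snd]; rewrite Hpv; f_equal; lia. }
  destruct (HG k _ Hk (ex_intro _ b Hll)) as [Hdk (b' & Hb' & Hll')].
  exists k, (fun n => oeval (bpair p (pval G k)) [n] e_sel). split; auto. split; auto. split; auto.
  exists (fun n => if b' then bsnd (bsnd v) n else bfst (bsnd v) n). split.
  - intros n. unfold e_sel. cbn [oeval nth].
    replace (bpair p (pval G k) 1%nat) with (pval G k 0%nat) by reflexivity.
    rewrite Hb'. destruct b'; cbn [Nat.eqb].
    + replace (8 * n + 6)%nat with (2 * (4 * n + 3))%nat by lia. rewrite bpair_even.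
      unfold bsnd. rewrite Hpv. f_equal. lia.
    + replace (8 * n + 2)%nat with (2 * (4 * n + 1))%nat by lia. rewrite bpair_even.
      unfold bfst, bsnd. rewrite Hpv. f_equal. lia.
  - exists b'. split; auto. intros n. destruct b'; reflexivity.
Qed.

Lemma idx_y (y q : Baire) : (forall i, y i = q i) -> forall m,
  bfst (bfst y) m = q (4 * m)%nat /\ bsnd (bfst y) m = q (4 * m + 2)%nat /\
  bfst (bsnd y) m = q (4 * m + 1)%nat /\ bsnd (bsnd y) m = q (4 * m + 3)%nat.
Proof.
  intros H m. unfold bfst, bsnd. rewrite !H. repeat split; f_equal; lia.
Qed.

Lemma LLPO_of_q (y q : Baire) (b : bool) : (forall i, y i = q i) ->
  LLPOdom (fun n => q (4 * n)%nat) (fun n => q (4 * n + 2)%nat) ->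
  (forall m, q (if b then 4 * m + 2 else 4 * m)%nat = 0%nat) ->
  LLPO (bfst (bfst y), bsnd (bfst y)) b.
Proof.
  intros Hyq HD Hz. unfold LLPO. cbn [fst snd]. split.
  - intros j j' m m' H1 H2. apply (HD j j' m m').
    + destruct (idx_y y q Hyq m) as (E1 & E2 & _). destruct j; [rewrite E2 in H1|rewrite E1 in H1]; exact H1.
    + destruct (idx_y y q Hyq m') as (E1 & E2 & _). destruct j'; [rewrite E2 in H2|rewrite E1 in H2]; exact H2.
  - intros m. destruct (idx_y y q Hyq m) as (E1 & E2 & _). specialize (Hz m).
    destruct b; [rewrite E2|rewrite E1]; exact Hz.
Qed.

Lemma LLPO_to_q (y q : Baire) (b : bool) : (forall i, y i = q i) ->
  LLPO (bfst (bfst y), bsnd (bfst y)) b -> forall m, q (if b then 4 * m + 2 else 4 * m)%nat = 0%nat.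
Proof.
  intros Hyq [_ Hz] m. specialize (Hz m). cbn [fst snd] in Hz.
  destruct (idx_y y q Hyq m) as (E1 & E2 & _). destruct b; [rewrite E2 in Hz|rewrite E1 in Hz]; exact Hz.
Qed.

Lemma covby_conv (p : Baire) (A : R -> Prop) : rep_closed_neg (bsnd p) A -> forall y, ~ A y <-> covby p y.
Proof.
  intros H y. specialize (H y). unfold covby, ivl, in_interval, LO, HI, loc, hic. split.
  - intros Hn. apply H in Hn. destruct Hn as (n & code & E & Hi). exists n, code. unfold bsnd in E. replace (2 * n + 1)%nat with (S (2 * n)) by lia. split; auto.
    unfold in_interval in Hi. destruct (nunpair code). exact Hi.
  - intros (n & code & E & Hi). apply H. exists n, code. unfold bsnd. replace (S (2 * n)) with (2 * n + 1)%nat by lia. split; auto.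
    unfold in_interval. destruct (nunpair code). exact Hi.
Qed.

Lemma W3 : WRed (rep_prod rep_cauchy rep_closed_neg) rep_cauchy rep_baire rep_baire Proj (mcomp g0 f0).
Proof.
  destruct (assoc_expr F_main F_main_fvb) as [aK [cK HK]].
  destruct (assoc_expr e_bsnd eq_refl) as [aH [cH HH]].
  exists aK, aH. split; auto. split; auto.
  intros G HG p [x A] [Hx HA] Hdom.
  cbn [fst snd] in Hx, HA.
  assert (Hx' : forall n, Rabs (X p n - x) <= / 2 ^ n). { intros n. rewrite X_ok. apply Hx. }
  assert (HA' := covby_conv p A HA).
  assert (Hne : exists z, A z). { destruct Hdom as [y [Hz _]]. exact Hz. }
  destruct (main_sem p x A Hx' HA' Hne) as (q & Hlim & Huniq & Hdom2 & Hans).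
  set (k := fun w => oeval p [w] F_main).
  assert (Hg0dom : forall y, f0 k y -> mdom g0 y).
  { intros y Hy0. pose proof (Huniq y Hy0) as Hy.
    destruct (classic (forall m, q (4 * m)%nat = 0%nat)) as [H0|H0].
    - exists (bfst (bsnd y)), false. split. apply (LLPO_of_q y q false Hy Hdom2 H0). intros; reflexivity.
    - exists (bsnd (bsnd y)), true. split; [|intros; reflexivity]. apply (LLPO_of_q y q true Hy Hdom2).
      apply not_all_ex_not in H0. destruct H0 as [m0 Hm0]. intros m.
      destruct (Nat.eq_dec (q (4 * m + 2)%nat) 0) as [E|E]; auto.
      exfalso. destruct (Hdom2 false true m0 m Hm0 E). discriminate. }
  assert (Hmd : mdom (mcomp g0 f0) k).
  { destruct (Hg0dom q Hlim) as [t Ht]. exists t. split. exact Hg0dom. exists q. split; auto. }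
  destruct (HG k k (fun n => eq_refl) Hmd) as [Hdk (t & Ht & _ & y & Hy & b & Hll & Hsel)].
  pose proof (Huniq y Hy) as Hyq.
  destruct (Hans b (LLPO_to_q y q b Hyq Hll)) as (yv & Hyv & Hproj).
  exists k, (fun n => oeval (bpair p (pval G k)) [n] e_bsnd). split; auto. split; auto. split; auto.
  exists yv. split; auto.
  intros n. unfold e_bsnd. cbn [oeval nth]. rewrite bpair_odd, Ht, Hsel.
  destruct (idx_y y q Hyq n) as (_ & _ & E3 & E4).
  specialize (Hyv n). destruct b; [rewrite E4|rewrite E3]; exact Hyv.
Qed.

Theorem proposition4p10 :
  WRed_cprod (rep_prod rep_cauchy rep_closed_neg) rep_cauchy
    rep_baire_seq rep_baire
    (rep_prod rep_baire rep_baire) rep_bool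
    Proj LLPO lim.
Proof.
  exists Baire, Baire, Baire, rep_baire, rep_baire, rep_baire, f0, g0.
  split. apply rep_baire_is_rep. split. apply rep_baire_is_rep. split. apply rep_baire_is_rep.
  split. exact W1. split. exact W2. exact W3.
Qed.
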